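(* Let $\alpha\in[0,1)$ and $0<a<b<1$. There exists $\mu(\alpha,a,b)>0$ such that $\int_a^b\tilde\Phi_{\alpha,m}(x)^2\,dx\ge\mu(\alpha,a,b)$ for all $m\ge1$.
   Context: Let $\nu_\alpha=\frac{1-\alpha}{2-\alpha}$, $\kappa_\alpha=\frac{2-\alpha}2$. For real $\mu$, $J_\mu$ is the Bessel function of the first kind of order $\mu$ and $0<j_{\mu,1}<j_{\mu,2}<\cdots$ its positive zeros. Let $\Phi^{(o)}_{\alpha,n}$ be the odd function on $(-1,1)$ equal to $x^{\frac{1-\alpha}2}J_{\nu_\alpha}(j_{\nu_\alpha,n}x^{\kappa_\alpha})$ for $x\in(0,1)$, and $\Phi^{(e)}_{\alpha,n}$ the even function equal to $|x|^{\frac{1-\alpha}2}J_{-\nu_\alpha}(j_{-\nu_\alpha,n}|x|^{\kappa_\alpha})$ for $x\ne0$. Define for $n\ge1$: $\tilde\Phi_{\alpha,2n-1}=\frac{\sqrt{\kappa_\alpha}}{|J'_{-\nu_\alpha}(j_{-\nu_\alpha,n})|}\Phi^{(e)}_{\alpha,n}$ and $\tilde\Phi_{\alpha,2n}=\frac{\sqrt{\kappa_\alpha}}{|J'_{\nu_\alpha}(j_{\nu_\alpha,n})|}\Phi^{(o)}_{\alpha,n}$. *)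

(* Defs.v *)
From Stdlib Require Import Reals Lra ClassicalEpsilon List.
From Coquelicot Require Import Coquelicot.
Open Scope R_scope.

Definition Gamma (s : R) : R :=
  RInt_gen (fun t => Rpower t (s - 1) * exp (- t)) (at_right 0) (Rbar_locally p_infty).

Definition besselJ (mu x : R) : R :=
  Rpower (x / 2) mu *
  Series (fun k => (-1) ^ k / (INR (Factorial.fact k) * Gamma (INR k + mu + 1)) * (x / 2) ^ (2 * k)).

Definition is_nth_pos_zero (mu : R) (n : nat) (j : R) : Prop :=
  0 < j /\ besselJ mu j = 0 /\
  exists l : list R, NoDup l /\ length l = (n - 1)%nat /\
    forall x, In x l <-> (0 < x < j /\ besselJ mu x = 0).

Definition bessel_zero (mu : R) (n : nat) : R :=
  epsilon (inhabits 0) (fun j => is_nth_pos_zero mu n j).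

Definition nu_ (alpha : R) : R := (1 - alpha) / (2 - alpha).
Definition kappa_ (alpha : R) : R := (2 - alpha) / 2.

Definition Phi_o (alpha : R) (n : nat) (x : R) : R :=
  let f := fun y => Rpower y ((1 - alpha) / 2) *
                    besselJ (nu_ alpha) (bessel_zero (nu_ alpha) n * Rpower y (kappa_ alpha)) in
  if Rlt_dec 0 x then f x else if Rlt_dec x 0 then - f (- x) else 0.

(* Phi^(e)_{alpha,n}: even function, defined for x <> 0 (value 0 at x = 0, irrelevant). *)
Definition Phi_e (alpha : R) (n : nat) (x : R) : R :=
  if Req_EM_T x 0 then 0 else
  Rpower (Rabs x) ((1 - alpha) / 2) *
  besselJ (- nu_ alpha) (bessel_zero (- nu_ alpha) n * Rpower (Rabs x) (kappa_ alpha)).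

Definition tPhi (alpha : R) (m : nat) (x : R) : R :=
  if Nat.odd m then
    let n := ((m + 1) / 2)%nat in
    sqrt (kappa_ alpha) / Rabs (Derive (besselJ (- nu_ alpha)) (bessel_zero (- nu_ alpha) n))
      * Phi_e alpha n x
  else
    let n := (m / 2)%nat in
    sqrt (kappa_ alpha) / Rabs (Derive (besselJ (nu_ alpha)) (bessel_zero (nu_ alpha) n))
      * Phi_o alpha n x.

(* Main.v *)
Require Import Defs.
From Stdlib Require Import Reals Lra Lia Psatz ClassicalEpsilon List ZArith.
From Coquelicot Require Import Coquelicot.
Open Scope R_scope.


Lemma is_derive_Rpower t y : 0 < t -> is_derive (fun x => Rpower x y) t (y * Rpower t (y - 1)).
Proof. intros; apply is_derive_Reals, derivable_pt_lim_power; auto. Qed.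

Lemma ex_derive_Rpower t y : 0 < t -> ex_derive (fun x => Rpower x y) t.
Proof. intros; eexists; apply is_derive_Rpower; auto. Qed.

Lemma continuous_Rpower t y : 0 < t -> continuous (fun x => Rpower x y) t.
Proof. intros; apply (ex_derive_continuous (fun x => Rpower x y)), ex_derive_Rpower; auto. Qed.

Definition gf (s t : R) := Rpower t (s - 1) * exp (- t).

Lemma gf_cont s t : 0 < t -> continuous (gf s) t.
Proof. intros; apply (ex_derive_continuous (gf s)); unfold gf; auto_derive; auto.
  apply ex_derive_Rpower; auto. Qed.

Lemma gf_pos s t : 0 < t -> 0 < gf s t.
Proof. intros; unfold gf, Rpower; apply Rmult_lt_0_compat; apply exp_pos. Qed.

Lemma gf_exRInt s u v : 0 < u -> 0 < v -> ex_RInt (gf s) u v.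
Proof. intros; apply (ex_RInt_continuous (V:=R_CompleteNormedModule)); intros z Hz; apply gf_cont.
  destruct (Rle_dec u v); [rewrite Rmin_left in Hz|rewrite Rmin_right in Hz]; lra. Qed.

Lemma ln_lt_self y : 0 < y -> ln y < y.
Proof. intros. pose proof (exp_ineq1_le y).
  rewrite <- (ln_exp y) at 2. apply ln_increasing; lra. Qed.

Lemma exp_le_exp x y : x <= y -> exp x <= exp y.
Proof. intros [H|H]; [left; apply exp_increasing; auto| subst; lra]. Qed.

Lemma gf_bound_big s t : 1 <= t -> gf s t <= exp (2 * (s - 1) ^ 2) * exp (- t / 2).
Proof.
  intros Ht. unfold gf, Rpower. rewrite <- !exp_plus. apply exp_le_exp.
  assert (HL0 : 0 <= ln t) by (rewrite <- ln_1; apply ln_le; lra).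
  assert (Hr : 0 < sqrt t) by (apply sqrt_lt_R0; lra).
  assert (Hrr : sqrt t * sqrt t = t) by (apply sqrt_sqrt; lra).
  assert (HL : ln t < 2 * sqrt t).
  { replace (ln t) with (ln (sqrt t * sqrt t)) by (rewrite Hrr; auto).
    rewrite ln_mult by lra. pose proof (ln_lt_self (sqrt t) Hr). lra. }
  destruct (Rle_dec 0 (s - 1)).
  - assert ((s-1) * ln t <= (s-1) * (2 * sqrt t)) by (apply Rmult_le_compat_l; lra).
    assert (0 <= (s - 1 - sqrt t / 2)^2) by apply pow2_ge_0.
    rewrite <- Hrr at 2 3. nra.
  - assert ((s-1) * ln t <= 0) by nra. assert (0 <= (s-1)^2) by apply pow2_ge_0. lra.
Qed.

Lemma D_mult (f g : R -> R) (x a b : R) : is_derive f x a -> is_derive g x b ->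
  is_derive (fun t => f t * g t) x (a * g x + f x * b).
Proof. intros H1 H2. exact (@is_derive_mult R_AbsRing f g x a b H1 H2 Rmult_comm). Qed.
Lemma D_plus (f g : R -> R) (x a b : R) : is_derive f x a -> is_derive g x b ->
  is_derive (fun t => f t + g t) x (a + b).
Proof. intros H1 H2. exact (@is_derive_plus R_AbsRing R_NormedModule f g x a b H1 H2). Qed.
Lemma D_minus (f g : R -> R) (x a b : R) : is_derive f x a -> is_derive g x b ->
  is_derive (fun t => f t - g t) x (a - b).
Proof. intros H1 H2. exact (@is_derive_minus R_AbsRing R_NormedModule f g x a b H1 H2). Qed.
Lemma D_opp (f : R -> R) (x a : R) : is_derive f x a -> is_derive (fun t => - f t) x (- a).
Proof. intros H1. exact (@is_derive_opp R_AbsRing R_NormedModule f x a H1). Qed.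
Lemma D_comp (f g : R -> R) (x a b : R) : is_derive f (g x) a -> is_derive g x b ->
  is_derive (fun t => f (g t)) x (a * b).
Proof. intros H1 H2. rewrite Rmult_comm. exact (@is_derive_comp R_AbsRing R_NormedModule f g x a b H1 H2). Qed.
Lemma D_const (k x : R) : is_derive (fun _ => k) x 0.
Proof. exact (@is_derive_const R_AbsRing R_NormedModule k x). Qed.
Lemma D_id (x : R) : is_derive (fun t => t) x 1.
Proof. exact (@is_derive_id R_AbsRing x). Qed.
Lemma D_ext (f g : R -> R) (x a b : R) : is_derive f x a -> (forall t, f t = g t) -> a = b -> is_derive g x b.
Proof. intros H3 H1 H2; subst; exact (@is_derive_ext R_AbsRing R_NormedModule f g x b H1 H3). Qed.
Lemma D_ext_loc (f g : R -> R) (x a : R) : locally x (fun t => f t = g t) -> is_derive f x a -> is_derive g x a.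
Proof. intros H1 H3; exact (@is_derive_ext_loc R_AbsRing R_NormedModule f g x a H1 H3). Qed.
Lemma D_exp x : is_derive exp x (exp x).
Proof. apply is_derive_Reals, derivable_pt_lim_exp. Qed.
Lemma D_cont (f : R -> R) (x a : R) : is_derive f x a -> continuous f x.
Proof. intros H; apply (ex_derive_continuous f); exists a; auto. Qed.

Lemma RInt_deriv (F f : R -> R) u v : (forall x, Rmin u v <= x <= Rmax u v -> is_derive F x (f x)) ->
  (forall x, Rmin u v <= x <= Rmax u v -> continuous f x) -> @eq R (RInt f u v) (F v - F u).
Proof. intros H1 H2. apply is_RInt_unique. exact (@is_RInt_derive R_CompleteNormedModule F f u v H1 H2). Qed.

Lemma D_expm2 x : is_derive (fun t => exp (- t / 2)) x (- exp (- x / 2) / 2).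
Proof.
  eapply D_ext. apply (D_comp exp (fun t => - t / 2)). apply D_exp.
  eapply D_ext. apply (D_mult (fun t => - t) (fun _ => / 2)). apply D_opp, D_id. apply D_const.
  intros; reflexivity. reflexivity. intros; reflexivity. simpl; field.
Qed.

Lemma gf_int_small s u v : 0 < s -> 0 < u <= v ->
  0 <= RInt (gf s) u v <= (Rpower v s - Rpower u s) / s.
Proof.
  intros Hs Huv. split.
  - apply RInt_ge_0; [lra| apply gf_exRInt; lra|]. intros; left; apply gf_pos; lra.
  - assert (E : @eq R (RInt (fun t => Rpower t (s - 1)) u v) ((Rpower v s - Rpower u s) / s)).
    { rewrite (RInt_deriv (fun t => Rpower t s / s)).
      - field; lra.
      - intros x Hx. rewrite Rmin_left in Hx by lra.
        eapply D_ext. apply (D_mult (fun t => Rpower t s) (fun _ => / s)).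
        apply is_derive_Rpower; lra. apply D_const. intros; reflexivity. field. lra.
      - intros x Hx. rewrite Rmin_left in Hx by lra. apply continuous_Rpower; lra. }
    rewrite <- E. apply RInt_le; [lra| apply gf_exRInt; lra| |].
    + apply (ex_RInt_continuous (V:=R_CompleteNormedModule)). intros z Hz.
      rewrite Rmin_left in Hz by lra. apply continuous_Rpower; lra.
    + intros x Hx. unfold gf. assert (0 < Rpower x (s-1)) by apply exp_pos.
      assert (exp (-x) <= 1). { rewrite <- exp_0. apply exp_le_exp. lra. } nra.
Qed.

Lemma gf_int_big s u v : 1 <= u <= v ->
  0 <= RInt (gf s) u v <= 2 * exp (2 * (s - 1) ^ 2) * exp (- u / 2).
Proof.
  intros Huv. set (C := exp (2 * (s - 1) ^ 2)). split.
  - apply RInt_ge_0; [lra| apply gf_exRInt; lra|]. intros; left; apply gf_pos; lra.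
  - assert (DC : forall x, is_derive (fun t => C * exp (- t / 2)) x (C * (- exp (- x / 2) / 2))).
    { intros x. eapply D_ext. apply (D_mult (fun _ => C) (fun t => exp (- t / 2))).
      apply D_const. apply D_expm2. intros; reflexivity. ring. }
    assert (E : @eq R (RInt (fun t => C * exp (- t / 2)) u v) (2 * C * exp (- u / 2) - 2 * C * exp (- v / 2))).
    { rewrite (RInt_deriv (fun t => - 2 * C * exp (- t / 2))).
      - ring.
      - intros x Hx.
        eapply D_ext. apply (D_mult (fun _ => - 2 * C) (fun t => exp (- t / 2))).
        apply D_const. apply D_expm2. intros; reflexivity. field.
      - intros x Hx. apply (D_cont _ _ _ (DC x)). }
    assert (0 < C * exp (- v / 2)) by (apply Rmult_lt_0_compat; apply exp_pos).
    apply Rle_trans with (RInt (fun t => C * exp (- t / 2)) u v); [|lra].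
    apply RInt_le; [lra| apply gf_exRInt; lra| |].
    + apply (ex_RInt_continuous (V:=R_CompleteNormedModule)). intros z Hz.
      apply (D_cont _ _ _ (DC z)).
    + intros x Hx. apply gf_bound_big. lra.
Qed.

Lemma is_RInt_gen_of_lim (f : R -> R) Fa Fb {FFa : Filter Fa} {FFb : Filter Fb} (l : R) :
  filter_prod Fa Fb (fun ab => ex_RInt f (fst ab) (snd ab)) ->
  filterlim (fun ab => RInt f (fst ab) (snd ab)) (filter_prod Fa Fb) (locally l) ->
  is_RInt_gen f Fa Fb l.
Proof.
  intros Hex Hlim P HP. specialize (Hlim P HP). unfold filtermapi.
  unfold filtermap in Hlim.
  generalize (filter_and _ _ Hex Hlim). apply filter_imp.
  intros ab [H1 H2]. exists (RInt f (fst ab) (snd ab)). split; auto.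
  exact (@RInt_correct R_CompleteNormedModule f _ _ H1).
Qed.

Lemma ball_R (x y e : R) : Rabs (y - x) < e -> ball x e y.
Proof. intros H. exact H. Qed.

Lemma gsmall s x y d : 0 < s -> 0 < x <= d -> 0 < y <= d -> Rabs (RInt (gf s) x y) <= Rpower d s / s.
Proof.
  intros Hs Hx Hy.
  assert (K : forall u v, 0 < u <= v -> v <= d -> Rabs (RInt (gf s) u v) <= Rpower d s / s).
  { intros u v Huv Hv. destruct (gf_int_small s u v Hs Huv).
    rewrite Rabs_right by lra.
    assert (Rpower v s <= Rpower d s) by (apply Rle_Rpower_l; lra).
    assert (0 < Rpower u s) by apply exp_pos.
    apply Rle_trans with ((Rpower v s - Rpower u s) / s); auto.
    unfold Rdiv; apply Rmult_le_compat_r; [left; apply Rinv_0_lt_compat; lra|lra]. }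
  destruct (Rle_dec x y). apply K; lra.
  rewrite <- (opp_RInt_swap (V:=R_CompleteNormedModule)) by (apply gf_exRInt; lra).
  change (Rabs (- RInt (gf s) y x) <= Rpower d s / s). rewrite Rabs_Ropp. apply K; lra.
Qed.

Lemma gbig s x y M : 1 <= M -> M <= x -> M <= y ->
  Rabs (RInt (gf s) x y) <= 2 * exp (2 * (s - 1) ^ 2) * exp (- M / 2).
Proof.
  intros HM Hx Hy.
  assert (K : forall u v, M <= u <= v -> Rabs (RInt (gf s) u v) <= 2 * exp (2 * (s - 1) ^ 2) * exp (- M / 2)).
  { intros u v Huv. destruct (gf_int_big s u v) as [A B]; [lra|].
    rewrite Rabs_right by lra. eapply Rle_trans; [apply B|].
    apply Rmult_le_compat_l. assert (0 < exp (2 * (s - 1) ^ 2)) by apply exp_pos; lra.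
    apply exp_le_exp; lra. }
  destruct (Rle_dec x y). apply K; lra.
  rewrite <- (opp_RInt_swap (V:=R_CompleteNormedModule)) by (apply gf_exRInt; lra).
  change (Rabs (- RInt (gf s) y x) <= 2 * exp (2 * (s - 1) ^ 2) * exp (- M / 2)). rewrite Rabs_Ropp. apply K; lra.
Qed.

Lemma gamma_exists s : 0 < s -> exists l, is_RInt_gen (gf s) (at_right 0) (Rbar_locally p_infty) l.
Proof.
  intros Hs.
  assert (FP : ProperFilter (filter_prod (at_right 0) (Rbar_locally p_infty))).
  { apply filter_prod_proper; try apply at_right_proper_filter; try apply Rbar_locally_filter. }
  assert (Hex : filter_prod (at_right 0) (Rbar_locally p_infty) (fun ab => 0 < fst ab /\ 1 < snd ab)).
  { apply (Filter_prod _ _ _ (fun x => 0 < x) (fun y => 1 < y)).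
    - exists (mkposreal 1 Rlt_0_1). intros; auto.
    - exists 1. auto.
    - simpl; auto. }
  destruct (proj1 (filterlim_locally_cauchy (F := filter_prod (at_right 0) (Rbar_locally p_infty))
     (fun ab => RInt (gf s) (fst ab) (snd ab)))) as [l Hl].
  - intros eps. set (C := exp (2 * (s - 1) ^ 2)).
    assert (HC : 0 < C) by apply exp_pos.
    assert (He : 0 < eps) by apply cond_pos.
    set (d := Rmin 1 (Rpower (s * eps / 4) (/ s))).
    assert (Hd0 : 0 < d) by (apply Rmin_pos; [lra| apply exp_pos]).
    assert (Hd : Rpower d s / s <= eps / 4).
    { assert (Rpower d s <= s * eps / 4).
      { assert (0 < s * eps / 4) by (apply Rdiv_lt_0_compat; [apply Rmult_lt_0_compat|]; lra).
        replace (s * eps / 4) with (Rpower (Rpower (s * eps / 4) (/ s)) s).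
        apply Rle_Rpower_l; [lra|split; auto; apply Rmin_r].
        rewrite Rpower_mult, Rinv_l, Rpower_1; lra. }
      apply Rmult_le_reg_r with s; auto. unfold Rdiv. rewrite Rmult_assoc, Rinv_l; lra. }
    set (M := Rmax 1 (- 2 * ln (eps / (8 * C)))).
    assert (HM : 2 * C * exp (- M / 2) <= eps / 4).
    { assert (exp (- M / 2) <= eps / (8 * C)).
      { rewrite <- (exp_ln (eps / (8 * C))) by (apply Rdiv_lt_0_compat; lra).
        apply exp_le_exp. pose proof (Rmax_r 1 (- 2 * ln (eps / (8 * C)))). fold M in H. lra. }
      apply Rle_trans with (2 * C * (eps / (8 * C))). apply Rmult_le_compat_l; lra.
      right; field; lra. }
    exists (fun ab => 0 < fst ab <= d /\ M <= snd ab). split.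
    + apply (Filter_prod _ _ _ (fun x => 0 < x <= d) (fun y => M <= y)).
      * exists (mkposreal d Hd0). intros y Hy Hy0. simpl in *. split; auto.
        unfold ball in Hy; simpl in Hy; unfold AbsRing_ball, abs, minus, plus, opp in Hy; simpl in Hy.
        apply Rabs_lt_between in Hy. lra.
      * exists M. intros; lra.
      * simpl; auto.
    + intros [u1 u2] [v1 v2] [Hu1 Hu2] [Hv1 Hv2]. simpl in *. apply ball_R.
      assert (HM1 : 1 <= M) by apply Rmax_l.
      assert (E : RInt (gf s) v1 v2 - RInt (gf s) u1 u2 = RInt (gf s) v1 u1 + RInt (gf s) u2 v2).
      { rewrite <- (RInt_Chasles (V:=R_CompleteNormedModule) (gf s) v1 u1 v2) by (apply gf_exRInt; lra).
        rewrite <- (RInt_Chasles (V:=R_CompleteNormedModule) (gf s) u1 u2 v2) by (apply gf_exRInt; lra).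
        change (RInt (gf s) v1 u1 + (RInt (gf s) u1 u2 + RInt (gf s) u2 v2) - RInt (gf s) u1 u2 =
          RInt (gf s) v1 u1 + RInt (gf s) u2 v2). ring. }
      rewrite E. eapply Rle_lt_trans. apply Rabs_triang.
      pose proof (gsmall s v1 u1 d Hs Hv1 Hu1) as G1. pose proof (gbig s u2 v2 M HM1 Hu2 Hv2) as G2.
      unfold C in HM. assert (A1 := Rle_trans _ _ _ G1 Hd). assert (A2 := Rle_trans _ _ _ G2 HM). lra.
  - exists l. apply (is_RInt_gen_of_lim (gf s) (at_right 0) (Rbar_locally p_infty)); auto.
    + eapply filter_imp; [|exact Hex]. intros [x y] [H1 H2]; simpl in *. apply gf_exRInt; lra.
Qed.

Lemma RI_plus (f g : R -> R) a b : ex_RInt f a b -> ex_RInt g a b ->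
  @eq R (RInt (fun x => f x + g x) a b) (RInt f a b + RInt g a b).
Proof. intros; exact (@RInt_plus R_CompleteNormedModule f g a b H H0). Qed.
Lemma RI_minus (f g : R -> R) a b : ex_RInt f a b -> ex_RInt g a b ->
  @eq R (RInt (fun x => f x - g x) a b) (RInt f a b - RInt g a b).
Proof. intros; exact (@RInt_minus R_CompleteNormedModule f g a b H H0). Qed.
Lemma RI_scal (f : R -> R) k a b : ex_RInt f a b ->
  @eq R (RInt (fun x => k * f x) a b) (k * RInt f a b).
Proof. intros; exact (@RInt_scal R_CompleteNormedModule f a b k H). Qed.
Lemma RI_const (c a b : R) : @eq R (RInt (fun _ => c) a b) ((b - a) * c).
Proof. exact (@RInt_const R_CompleteNormedModule a b c). Qed.
Lemma RI_chasles (f : R -> R) a b c : ex_RInt f a b -> ex_RInt f b c ->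
  @eq R (RInt f a b + RInt f b c) (RInt f a c).
Proof. intros; exact (@RInt_Chasles R_CompleteNormedModule f a b c H H0). Qed.
Lemma RI_swap (f : R -> R) a b : ex_RInt f a b -> @eq R (RInt f b a) (- RInt f a b).
Proof. intros; symmetry; exact (@opp_RInt_swap R_CompleteNormedModule f a b H). Qed.
Lemma RI_ext (f g : R -> R) a b : (forall x, Rmin a b < x < Rmax a b -> f x = g x) ->
  @eq R (RInt f a b) (RInt g a b).
Proof. intros; exact (@RInt_ext R_CompleteNormedModule f g a b H). Qed.
Lemma RI_ex_cont (f : R -> R) a b : (forall x, Rmin a b <= x <= Rmax a b -> continuous f x) -> ex_RInt f a b.
Proof. intros; exact (@ex_RInt_continuous R_CompleteNormedModule f a b H). Qed.

Lemma cont_eps (f : R -> R) c e : continuous f c -> 0 < e ->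
  exists d, 0 < d /\ forall y, Rabs (y - c) < d -> Rabs (f y - f c) < e.
Proof.
  intros Hc He. destruct (proj1 (filterlim_locally f (f c)) Hc (mkposreal e He)) as [d Hd].
  exists d. split. apply cond_pos. intros y Hy. apply (Hd y). exact Hy.
Qed.

Lemma RInt_pos (f : R -> R) a b c : a < b -> (forall x, a <= x <= b -> continuous f x) ->
  (forall x, a <= x <= b -> 0 <= f x) -> a <= c <= b -> 0 < f c -> 0 < RInt f a b.
Proof.
  intros Hab Hc Hp Hcab Hfc.
  destruct (cont_eps f c (f c / 2) (Hc c Hcab)) as [d [Hd Hd2]]; [lra|].
  set (c1 := Rmax a (c - d / 2)). set (c2 := Rmin b (c + d / 2)).
  assert (H1 : a <= c1 <= c) by (split; [apply Rmax_l| apply Rmax_lub; lra]).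
  assert (H2 : c <= c2 <= b) by (split; [apply Rmin_glb; lra| apply Rmin_l]).
  assert (H12 : c1 < c2).
  { destruct (Rle_lt_dec c1 (c - d / 2)). assert (c - d/2 < c) by lra. lra.
    unfold c1 in r. rewrite Rmax_left in r by (apply Rnot_lt_le; intro; rewrite Rmax_right in r; lra).
    assert (c1 = a) by (unfold c1; apply Rmax_left; lra).
    unfold c2; apply Rmin_glb_lt; lra. }
  assert (Hex : forall u v, a <= u <= b -> a <= v <= b -> ex_RInt f u v).
  { intros u v Hu Hv. apply RI_ex_cont. intros x Hx. apply Hc.
    split; [apply Rle_trans with (Rmin u v); [apply Rmin_glb|]|apply Rle_trans with (Rmax u v); [|apply Rmax_lub]]; lra. }
  rewrite <- (RI_chasles f a c1 b), <- (RI_chasles f c1 c2 b) by (apply Hex; lra).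
  assert (0 <= RInt f a c1) by (apply RInt_ge_0; [lra|apply Hex; lra|intros; apply Hp; lra]).
  assert (0 <= RInt f c2 b) by (apply RInt_ge_0; [lra|apply Hex; lra|intros; apply Hp; lra]).
  assert ((c2 - c1) * (f c / 2) <= RInt f c1 c2).
  { rewrite <- RI_const. apply RInt_le; [lra| apply RI_ex_cont; intros; apply continuous_const | apply Hex; lra|].
    intros x Hx. assert (Rabs (x - c) < d).
    { apply Rabs_lt_between. pose proof (Rmax_r a (c - d/2)). pose proof (Rmin_r b (c + d/2)).
      fold c1 in H3. fold c2 in H4. lra. }
    apply Hd2 in H3. apply Rabs_lt_between in H3. lra. }
  assert (0 < (c2 - c1) * (f c / 2)) by (apply Rmult_lt_0_compat; lra). lra.
Qed.

Lemma lim_ge {T} (F : (T -> Prop) -> Prop) {FF : ProperFilter F} (g : T -> R) l K :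
  filterlim g F (locally l) -> F (fun x => K <= g x) -> K <= l.
Proof.
  intros Hl HK. destruct (Rle_lt_dec K l) as [|Hlt]; auto.
  assert (He : 0 < K - l) by lra.
  destruct (filter_ex _ (filter_and _ _ HK (proj1 (filterlim_locally g l) Hl (mkposreal _ He)))) as [x [H1 H2]].
  change (Rabs (g x - l) < K - l) in H2. apply Rabs_lt_between in H2. lra.
Qed.

Lemma lim_of_gen (f : R -> R) Fa Fb {FFa : Filter Fa} {FFb : Filter Fb} (l : R) :
  is_RInt_gen f Fa Fb l ->
  filterlim (fun ab => RInt f (fst ab) (snd ab)) (filter_prod Fa Fb) (locally l).
Proof.
  intros H P HP. specialize (H P HP). unfold filtermapi in H. unfold filtermap.
  eapply filter_imp; [|exact H]. intros ab [y [Hy Py]].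
  rewrite (is_RInt_unique f _ _ y Hy). exact Py.
Qed.

Lemma FP0 : ProperFilter (filter_prod (at_right 0) (Rbar_locally p_infty)).
Proof. apply filter_prod_proper; try apply at_right_proper_filter; try apply Rbar_locally_filter. Qed.

Lemma gamma_gen s : 0 < s -> is_RInt_gen (gf s) (at_right 0) (Rbar_locally p_infty) (Gamma s).
Proof.
  intros Hs. destruct (gamma_exists s Hs) as [l Hl].
  change (is_RInt_gen (gf s) (at_right 0) (Rbar_locally p_infty) (RInt_gen (gf s) (at_right 0) (Rbar_locally p_infty))).
  rewrite (is_RInt_gen_unique (gf s) l Hl). exact Hl.
Qed.

Lemma ev_box (P : R -> R -> Prop) d M : 0 < d -> (forall x y, 0 < x < d -> M < y -> P x y) ->
  filter_prod (at_right 0) (Rbar_locally p_infty) (fun ab => P (fst ab) (snd ab)).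
Proof.
  intros Hd H. apply (Filter_prod _ _ _ (fun x => 0 < x < d) (fun y => M < y)).
  - exists (mkposreal d Hd). intros y Hy Hy0. change (Rabs (y - 0) < d) in Hy.
    apply Rabs_lt_between in Hy. split; lra.
  - exists M; auto.
  - intros; apply H; auto.
Qed.

Lemma gamma_pos s : 0 < s -> 0 < Gamma s.
Proof.
  intros Hs. pose proof (lim_of_gen _ _ _ _ (gamma_gen s Hs)) as HL.
  assert (P12 : 0 < RInt (gf s) 1 2).
  { apply (RInt_pos _ 1 2 1); try lra. intros; apply gf_cont; lra. intros; left; apply gf_pos; lra.
    apply gf_pos; lra. }
  apply Rlt_le_trans with (RInt (gf s) 1 2); auto.
  apply (lim_ge _ (FF := FP0) _ _ _ HL).
  apply (ev_box (fun x y => RInt (gf s) 1 2 <= RInt (gf s) x y) 1 2); [lra|].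
  intros x y Hx Hy.
  rewrite <- (RI_chasles (gf s) x 1 y), <- (RI_chasles (gf s) 1 2 y) by (apply gf_exRInt; lra).
  assert (0 <= RInt (gf s) x 1) by (apply RInt_ge_0; [lra|apply gf_exRInt; lra|intros; left; apply gf_pos; lra]).
  assert (0 <= RInt (gf s) 2 y) by (apply RInt_ge_0; [lra|apply gf_exRInt; lra|intros; left; apply gf_pos; lra]).
  lra.
Qed.

Lemma C_mult (f g : R -> R) (x : R) : continuous f x -> continuous g x -> continuous (fun t => f t * g t) x.
Proof. intros; exact (@continuous_mult R_UniformSpace R_AbsRing f g x H H0). Qed.
Lemma C_plus (f g : R -> R) (x : R) : continuous f x -> continuous g x -> continuous (fun t => f t + g t) x.
Proof. intros; exact (@continuous_plus R_UniformSpace R_AbsRing R_NormedModule f g x H H0). Qed.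
Lemma C_minus (f g : R -> R) (x : R) : continuous f x -> continuous g x -> continuous (fun t => f t - g t) x.
Proof. intros; exact (@continuous_minus R_UniformSpace R_AbsRing R_NormedModule f g x H H0). Qed.
Lemma C_const (c x : R) : continuous (fun _ => c) x.
Proof. exact (@continuous_const R_UniformSpace R_UniformSpace c x). Qed.
Lemma C_id (x : R) : continuous (fun t => t) x.
Proof. exact (@continuous_id R_UniformSpace x). Qed.
Lemma C_comp (f g : R -> R) (x : R) : continuous f x -> continuous g (f x) -> continuous (fun t => g (f t)) x.
Proof. intros; exact (@continuous_comp R_UniformSpace R_UniformSpace R_UniformSpace f g x H H0). Qed.
Lemma C_ext (f g : R -> R) (x : R) : (forall t, f t = g t) -> continuous f x -> continuous g x.
Proof. intros; exact (@continuous_ext R_UniformSpace R_UniformSpace f g x H H0). Qed.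
Lemma C_ext_loc (f g : R -> R) (x : R) : locally x (fun t => f t = g t) -> continuous f x -> continuous g x.
Proof. intros H H0. apply (@continuous_ext_loc R_UniformSpace R_UniformSpace g f x); auto. Qed.

Lemma gamma_rec s : 0 < s -> Gamma (s + 1) = s * Gamma s.
Proof.
  intros Hs. assert (Hs1 : 0 < s + 1) by lra.
  set (h := fun t => Rpower t s * exp (- t)).
  assert (Hg1 : forall t, gf (s + 1) t = h t).
  { intros; unfold gf, h. replace (s + 1 - 1) with s by ring. reflexivity. }
  assert (Hid : forall x y, 0 < x -> 0 < y -> RInt (gf (s + 1)) x y = s * RInt (gf s) x y - (h y - h x)).
  { intros x y Hx Hy.
    assert (E : RInt (fun t => s * gf s t - gf (s + 1) t) x y = h y - h x).
    { apply RInt_deriv.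
      - intros t Ht. assert (0 < t) by (pose proof (Rmin_glb_lt x y 0); destruct (Rle_dec x y);
          [rewrite Rmin_left in Ht|rewrite Rmin_right in Ht]; lra).
        eapply D_ext. apply (D_mult (fun t => Rpower t s) (fun t => exp (- t))).
        apply is_derive_Rpower; auto.
        eapply D_ext. apply (D_comp exp (fun t => - t)). apply D_exp. apply D_opp, D_id.
        intros; reflexivity. reflexivity.
        intros; reflexivity. rewrite Hg1. unfold gf, h. generalize (Rpower t (s-1)) (Rpower t s) (exp (-t)); intros; ring.
      - intros t Ht. assert (0 < t) by (destruct (Rle_dec x y);
          [rewrite Rmin_left in Ht|rewrite Rmin_right in Ht]; lra).
        apply C_minus. apply C_mult. apply C_const. apply gf_cont; auto. apply gf_cont; auto. }
    assert (X1 : ex_RInt (gf s) x y) by (apply gf_exRInt; lra).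
    assert (X2 : ex_RInt (gf (s + 1)) x y) by (apply gf_exRInt; lra).
    assert (X3 : ex_RInt (fun t => s * gf s t) x y).
    { apply RI_ex_cont. intros t Ht. assert (0 < t) by (destruct (Rle_dec x y);
          [rewrite Rmin_left in Ht|rewrite Rmin_right in Ht]; lra).
      apply C_mult. apply C_const. apply gf_cont; auto. }
    rewrite (RI_minus _ _ _ _ X3 X2), (RI_scal _ _ _ _ X1) in E.
    generalize dependent (RInt (gf s) x y). generalize dependent (RInt (gf (s+1)) x y). intros. lra. }
  pose proof (lim_of_gen _ _ _ _ (gamma_gen s Hs)) as HL.
  assert (G : is_RInt_gen (gf (s + 1)) (at_right 0) (Rbar_locally p_infty) (s * Gamma s)).
  { apply (is_RInt_gen_of_lim (gf (s + 1)) (at_right 0) (Rbar_locally p_infty)).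
    - apply (ev_box (fun x y => ex_RInt (gf (s + 1)) x y) 1 0); [lra|]. intros; apply gf_exRInt; lra.
    - apply filterlim_locally. intros eps.
      assert (He : 0 < eps) by apply cond_pos.
      assert (He3 : 0 < eps / (3 * (s + 1))) by (apply Rdiv_lt_0_compat; lra).
      pose proof (proj1 (filterlim_locally _ _) HL (mkposreal _ He3)) as H1.
      set (d := Rpower (eps / 4) (/ s)).
      assert (Hd0 : 0 < d) by apply exp_pos.
      assert (Hd : Rpower d s = eps / 4).
      { unfold d. rewrite Rpower_mult, Rinv_l, Rpower_1; lra. }
      set (C := exp (2 * (s + 1 - 1) ^ 2)).
      assert (HC : 0 < C) by apply exp_pos.
      set (M := Rmax 1 (- 2 * ln (eps / (4 * C)))).
      assert (HM : C * exp (- M / 2) <= eps / 4).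
      { assert (exp (- M / 2) <= eps / (4 * C)).
        { rewrite <- (exp_ln (eps / (4 * C))) by (apply Rdiv_lt_0_compat; lra).
          apply exp_le_exp. pose proof (Rmax_r 1 (- 2 * ln (eps / (4 * C)))). fold M in H. lra. }
        apply Rle_trans with (C * (eps / (4 * C))). apply Rmult_le_compat_l; lra.
        right; field; lra. }
      assert (H2 : filter_prod (at_right 0) (Rbar_locally p_infty)
        (fun ab => (fun x y => 0 < x /\ 0 < y /\ 0 < h x < eps / 3 /\ 0 < h y < eps / 3) (fst ab) (snd ab))).
      { apply (ev_box (fun x y => 0 < x /\ 0 < y /\ 0 < h x < eps / 3 /\ 0 < h y < eps / 3) d M Hd0).
        intros x y Hx Hy. assert (HM1 : 1 <= M) by apply Rmax_l.
        assert (Hhp : forall t, 0 < t -> 0 < h t) by (intros; apply Rmult_lt_0_compat; apply exp_pos).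
        split; [lra|]. split; [lra|]. split; [split; [apply Hhp; lra|]|split; [apply Hhp; lra|]].
        * unfold h. assert (exp (- x) <= 1) by (rewrite <- exp_0; apply exp_le_exp; lra).
          assert (Rpower x s <= Rpower d s) by (apply Rle_Rpower_l; lra).
          assert (0 < Rpower x s) by apply exp_pos.
          generalize dependent (Rpower x s). generalize dependent (exp (-x)). intros. nra.
        * rewrite <- Hg1. eapply Rle_lt_trans. apply gf_bound_big. lra. fold C.
          apply Rle_lt_trans with (C * exp (- M / 2)); [|lra]. apply Rmult_le_compat_l; [lra|].
          apply exp_le_exp; lra. }
      eapply filter_imp; [|exact (filter_and _ _ H1 H2)].
      intros [x y] [B [Hx [Hy [Hhx Hhy]]]]. simpl in *. apply ball_R.
      change (Rabs (RInt (gf s) x y - Gamma s) < eps / (3 * (s + 1))) in B.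
      rewrite Hid by auto.
      generalize dependent (RInt (gf s) x y). generalize dependent (h x). generalize dependent (h y).
      intros hy Hhy hx Hhx I B.
      replace (s * I - (hy - hx) - s * Gamma s) with (s * (I - Gamma s) - hy + hx) by ring.
      eapply Rle_lt_trans. apply Rabs_triang. rewrite (Rabs_right hx) by lra.
      eapply Rle_lt_trans. apply Rplus_le_compat_r. apply Rabs_triang.
      rewrite Rabs_Ropp, (Rabs_right hy) by lra. rewrite Rabs_mult, (Rabs_right s) by lra.
      assert (s * Rabs (I - Gamma s) <= eps / 3).
      { apply Rle_trans with (s * (eps / (3 * (s + 1)))). apply Rmult_le_compat_l; lra.
        unfold Rdiv. rewrite Rinv_mult.
        apply Rmult_le_reg_r with (3 * (s + 1)). lra.
        replace (s * (eps * (/ 3 * / (s + 1))) * (3 * (s + 1))) with (s * eps) by (field; lra).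
        replace (eps * / 3 * (3 * (s + 1))) with (eps * (s + 1)) by field. nra. }
      lra. }
  rewrite <- (is_RInt_gen_unique _ _ G). reflexivity.
Qed.


Definition cc (mu : R) (k : nat) : R := (-1) ^ k / (INR (Factorial.fact k) * Gamma (INR k + mu + 1)).

Lemma Gk_pos mu k : -1 < mu -> 0 < Gamma (INR k + mu + 1).
Proof. intros; apply gamma_pos. pose proof (pos_INR k). lra. Qed.

Lemma cc_neq0 mu k : -1 < mu -> cc mu k <> 0.
Proof.
  intros Hm. unfold cc. pose proof (Gk_pos mu k Hm). pose proof (INR_fact_lt_0 k).
  apply Rmult_integral_contrapositive_currified. apply pow_nonzero; lra.
  apply Rinv_neq_0_compat. apply Rmult_integral_contrapositive_currified; lra.
Qed.

Lemma cc_rec mu k : -1 < mu -> cc mu (S k) * ((INR k + 1) * (INR k + 1 + mu)) = - cc mu k.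
Proof.
  intros Hm. unfold cc. rewrite S_INR.
  replace (INR k + 1 + mu + 1) with ((INR k + mu + 1) + 1) by ring.
  rewrite gamma_rec by (pose proof (pos_INR k); lra).
  rewrite fact_simpl, mult_INR, S_INR. simpl pow.
  pose proof (Gk_pos mu k Hm). pose proof (INR_fact_lt_0 k). pose proof (pos_INR k).
  generalize dependent (Gamma (INR k + mu + 1)). intros G HG.
  field. repeat split; lra.
Qed.

Lemma cc_radius mu : -1/2 <= mu -> CV_radius (cc mu) = p_infty.
Proof.
  intros Hm. apply CV_radius_infinite_DAlembert. intros; apply cc_neq0; lra.
  apply is_lim_seq_le_le with (fun _ => 0) (fun n => 2 * / INR (S n)).
  - intros n. pose proof (cc_rec mu n ltac:(lra)) as E. pose proof (cc_neq0 mu n ltac:(lra)).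
    pose proof (pos_INR n). rewrite S_INR.
    assert (cc mu (S n) / cc mu n = - / ((INR n + 1) * (INR n + 1 + mu))).
    { assert (cc mu (S n) = - cc mu n / ((INR n + 1) * (INR n + 1 + mu))) as E2.
      { rewrite <- E. field. split; lra. }
      rewrite E2. field. repeat split; lra. }
    rewrite H1, Rabs_Ropp, Rabs_right.
    split. left; apply Rinv_0_lt_compat; apply Rmult_lt_0_compat; lra.
    replace (2 * / (INR n + 1)) with (/ ((INR n + 1) / 2)) by (field; lra).
    apply Rinv_le_contravar. lra. nra.
    left; apply Rinv_0_lt_compat; apply Rmult_lt_0_compat; lra.
  - apply is_lim_seq_const.
  - replace (Finite 0) with (Rbar_mult 2 0) by (simpl; f_equal; ring).
    apply is_lim_seq_scal_l. apply (is_lim_seq_incr_1 (fun n => / INR n)).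
    replace (Finite 0) with (Rbar_inv p_infty) by reflexivity.
    apply is_lim_seq_inv. apply is_lim_seq_INR. discriminate.
Qed.

Definition SS mu w := PSeries (cc mu) w.
Definition S1 mu w := PSeries (PS_derive (cc mu)) w.
Definition S2 mu w := PSeries (PS_derive (PS_derive (cc mu))) w.

Lemma rad_in mu a w : -1/2 <= mu -> CV_radius a = CV_radius (cc mu) -> Rbar_lt (Rabs w) (CV_radius a).
Proof. intros Hm H. rewrite H, cc_radius by auto. simpl; auto. Qed.

Lemma dS mu w : -1/2 <= mu -> is_derive (SS mu) w (S1 mu w).
Proof. intros. apply is_derive_PSeries. apply rad_in with mu; auto. Qed.
Lemma dS1 mu w : -1/2 <= mu -> is_derive (S1 mu) w (S2 mu w).
Proof. intros. apply is_derive_PSeries. apply rad_in with mu; auto. apply CV_radius_derive. Qed.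
Lemma cS2 mu w : -1/2 <= mu -> continuous (S2 mu) w.
Proof. intros. apply continuity_pt_filterlim. apply PSeries_continuity. apply rad_in with mu; auto.
  rewrite !CV_radius_derive; auto. Qed.
Lemma cS mu w : -1/2 <= mu -> continuous (SS mu) w.
Proof. intros. apply (D_cont _ _ _ (dS mu w H)). Qed.
Lemma cS1 mu w : -1/2 <= mu -> continuous (S1 mu) w.
Proof. intros. apply (D_cont _ _ _ (dS1 mu w H)). Qed.

Lemma exs a w mu : -1/2 <= mu -> CV_radius a = CV_radius (cc mu) -> ex_series (fun k => a k * w ^ k).
Proof. intros. apply ex_pseries_R. apply CV_radius_inside. apply rad_in with mu; auto. Qed.

Lemma S_ode mu w : -1/2 <= mu -> w * S2 mu w + (mu + 1) * S1 mu w + SS mu w = 0.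
Proof.
  intros Hm. unfold S2, S1, SS. rewrite <- PSeries_incr_1.
  set (d2 := PS_derive (PS_derive (cc mu))). set (d1 := PS_derive (cc mu)).
  assert (E1 : ex_series (fun k => PS_incr_1 d2 k * w ^ k)).
  { apply ex_pseries_R. apply ex_pseries_incr_1. apply CV_radius_inside. apply rad_in with mu; auto.
    unfold d2; rewrite !CV_radius_derive; auto. }
  assert (E2 : ex_series (fun k => (mu + 1) * (d1 k * w ^ k))).
  { apply (ex_series_scal_l (V := R_NormedModule) (mu + 1)). apply exs with mu; auto.
    unfold d1; rewrite CV_radius_derive; auto. }
  assert (E3 : ex_series (fun k => cc mu k * w ^ k)) by (apply exs with mu; auto).
  unfold PSeries. rewrite <- Series_scal_l.
  rewrite <- Series_plus by auto. rewrite <- Series_plus.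
  2: { apply (ex_series_plus (V := R_NormedModule)); auto. }
  2: auto.
  rewrite (Series_ext _ (fun n => 0 * 0)). rewrite Series_scal_l. ring.
  intros [|k].
  - simpl. unfold d1, PS_derive. pose proof (cc_rec mu 0 ltac:(lra)). simpl in H.
    unfold zero; simpl. lra.
  - change (PS_incr_1 d2 (S k)) with (d2 k). unfold d1, d2, PS_derive. pose proof (cc_rec mu (S k) ltac:(lra)).
    rewrite !S_INR in *. simpl pow.
    generalize dependent (w * w ^ k). intros W.
    replace ((INR k + 1) * ((INR k + 1 + 1) * cc mu (S (S k))) * W +
      (mu + 1) * ((INR k + 1 + 1) * cc mu (S (S k)) * W) + cc mu (S k) * W)
      with ((cc mu (S (S k)) * ((INR k + 1 + 1) * (INR k + 1 + 1 + mu)) + cc mu (S k)) * W) by ring.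
    rewrite H. ring.
Qed.

Lemma Rpower_m1 t y : 0 < t -> Rpower t (y - 1) = Rpower t y / t.
Proof. intros. unfold Rminus. rewrite Rpower_plus, Rpower_Ropp, Rpower_1 by auto. reflexivity. Qed.

Lemma Rpower_pos t y : 0 < Rpower t y.
Proof. apply exp_pos. Qed.

Definition UU mu t := Rpower t (1/2 + mu) * SS mu (t ^ 2 / 4).
Definition U1 mu t := (1/2 + mu) * Rpower t (mu - 1/2) * SS mu (t ^ 2 / 4)
   + Rpower t (1/2 + mu) * (t / 2) * S1 mu (t ^ 2 / 4).
Definition qq mu t := 1 + (1/4 - mu ^ 2) / t ^ 2.

Lemma D_w t : is_derive (fun t => t ^ 2 / 4) t (t / 2).
Proof. eapply D_ext. apply (D_mult (fun t => t ^ 2) (fun _ => / 4)).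
  apply is_derive_Reals. apply derivable_pt_lim_pow. apply D_const. intros; reflexivity. simpl; field. Qed.

Lemma dU mu t : -1/2 <= mu -> 0 < t -> is_derive (UU mu) t (U1 mu t).
Proof.
  intros Hm Ht. unfold UU, U1.
  eapply D_ext. apply (D_mult (fun t => Rpower t (1/2 + mu)) (fun t => SS mu (t ^ 2 / 4))).
  apply is_derive_Rpower; auto.
  apply (D_comp (SS mu) (fun t => t ^ 2 / 4)). apply dS; auto. apply D_w.
  intros; reflexivity.
  replace (1/2 + mu - 1) with (mu - 1/2) by lra. ring.
Qed.

Lemma cU mu t : -1/2 <= mu -> 0 < t -> continuous (UU mu) t.
Proof. intros. apply (D_cont _ _ _ (dU mu t H H0)). Qed.

Lemma dU1 mu t : -1/2 <= mu -> 0 < t -> is_derive (U1 mu) t (- qq mu t * UU mu t).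
Proof.
  intros Hm Ht. unfold U1, UU, qq.
  eapply D_ext. apply D_plus.
  - apply (D_mult (fun t => (1/2 + mu) * Rpower t (mu - 1/2)) (fun t => SS mu (t ^ 2 / 4))).
    apply (D_mult (fun _ => 1/2 + mu) (fun t => Rpower t (mu - 1/2))). apply D_const.
    apply is_derive_Rpower; auto.
    apply (D_comp (SS mu) (fun t => t ^ 2 / 4)). apply dS; auto. apply D_w.
  - apply (D_mult (fun t => Rpower t (1/2 + mu) * (t / 2)) (fun t => S1 mu (t ^ 2 / 4))).
    apply (D_mult (fun t => Rpower t (1/2 + mu)) (fun t => t / 2)). apply is_derive_Rpower; auto.
    eapply D_ext. apply (D_mult (fun t => t) (fun _ => / 2)). apply D_id. apply D_const.
    intros; reflexivity. reflexivity.
    apply (D_comp (S1 mu) (fun t => t ^ 2 / 4)). apply dS1; auto. apply D_w.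
  - intros; reflexivity.
  - pose proof (S_ode mu (t ^ 2 / 4) Hm) as E.
    replace (mu - 1/2 - 1) with ((1/2 + mu - 1) - 1) by lra.
    replace (mu - 1/2) with (1/2 + mu - 1) by lra.
    rewrite !Rpower_m1 by auto.
    generalize dependent (Rpower t (1/2 + mu)). generalize dependent (SS mu (t ^ 2 / 4)).
    generalize dependent (S1 mu (t ^ 2 / 4)). generalize dependent (S2 mu (t ^ 2 / 4)).
    intros A2 A1 A0 E P.
    assert (A2 = (- (mu + 1) * A1 - A0) / (t ^ 2 / 4)) as E2.
    { apply Rmult_eq_reg_l with (t ^ 2 / 4). transitivity (- (mu + 1) * A1 - A0). lra. field. lra.
      assert (0 < t ^ 2) by (apply pow_lt; lra). lra. }
    rewrite E2. field. lra.
Qed.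

Lemma cU1 mu t : -1/2 <= mu -> 0 < t -> continuous (U1 mu) t.
Proof. intros. apply (D_cont _ _ _ (dU1 mu t H H0)). Qed.


Lemma D_contpt (f : R -> R) x a : is_derive f x a -> continuity_pt f x.
Proof. intros H. apply continuity_pt_filterlim. apply (D_cont _ _ _ H). Qed.

Lemma mono_inc (f df : R -> R) a b : a <= b -> (forall t, a <= t <= b -> is_derive f t (df t)) ->
  (forall t, a <= t <= b -> 0 <= df t) -> f a <= f b.
Proof.
  intros Hab Hd Hp. destruct (MVT_gen f a b df) as [c [Hc E]].
  - intros x Hx. rewrite Rmin_left, Rmax_right in Hx by lra. apply Hd; lra.
  - intros x Hx. rewrite Rmin_left, Rmax_right in Hx by lra. apply (D_contpt _ _ _ (Hd x Hx)).
  - rewrite Rmin_left, Rmax_right in Hc by lra. pose proof (Hp c Hc). nra.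
Qed.

Lemma mono_dec (f df : R -> R) a b : a <= b -> (forall t, a <= t <= b -> is_derive f t (df t)) ->
  (forall t, a <= t <= b -> df t <= 0) -> f b <= f a.
Proof.
  intros Hab Hd Hp. assert (- f a <= - f b); [|lra].
  apply (mono_inc (fun t => - f t) (fun t => - df t)); auto.
  intros; apply D_opp; auto. intros t Ht; pose proof (Hp t Ht); lra.
Qed.

Lemma D_sq (f : R -> R) (x a : R) : is_derive f x a -> is_derive (fun t => f t ^ 2) x (2 * f x * a).
Proof. intros H. eapply D_ext. apply (D_mult f f); exact H. intros; simpl; ring. ring. Qed.

Definition cq mu := 1/4 - mu ^ 2.

Lemma cq_range mu : -1/2 <= mu <= 1/2 -> 0 <= cq mu <= 1/4.
Proof. intros; unfold cq; split; nra. Qed.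

Lemma qq_ge1 mu t : -1/2 <= mu <= 1/2 -> 0 < t -> 1 <= qq mu t.
Proof. intros Hm Ht. unfold qq. pose proof (cq_range mu Hm). unfold cq in H.
  assert (0 < t ^ 2) by (apply pow_lt; lra).
  assert (0 <= (1/4 - mu^2) / t^2) by (apply Rdiv_le_0_compat; lra). lra. Qed.

Lemma dqq mu t : 0 < t -> is_derive (qq mu) t (- 2 * cq mu / t ^ 3).
Proof.
  intros Ht. unfold qq, cq.
  assert (t ^ 2 <> 0) by (apply pow_nonzero; lra).
  eapply D_ext. apply (D_plus (fun _ => 1) (fun t => (1/4 - mu^2) * / t ^ 2)). apply D_const.
  apply (D_mult (fun _ => 1/4 - mu^2) (fun t => / t ^ 2)). apply D_const.
  apply (is_derive_inv (fun t => t ^ 2)). apply is_derive_Reals. apply derivable_pt_lim_pow. auto.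
  intros; reflexivity. simpl. field. lra.
Qed.

Definition EE mu t := U1 mu t ^ 2 + qq mu t * UU mu t ^ 2.
Definition FF mu t := U1 mu t ^ 2 / qq mu t + UU mu t ^ 2.

Lemma E_dec mu s t : -1/2 <= mu <= 1/2 -> 0 < s <= t -> EE mu t <= EE mu s.
Proof.
  intros Hm Hst. apply (mono_dec (EE mu) (fun t => (- 2 * cq mu / t ^ 3) * UU mu t ^ 2)); [lra| |].
  - intros x Hx. assert (0 < x) by lra. unfold EE.
    eapply D_ext. apply D_plus.
    apply D_sq; apply (dU1 mu); lra.
    apply (D_mult (qq mu) (fun t => UU mu t ^ 2)). apply dqq; auto.
    apply D_sq; apply (dU mu); lra.
    intros; reflexivity. ring.
  - intros x Hx. assert (0 < x) by lra. pose proof (cq_range mu Hm).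
    assert (0 < x ^ 3) by (apply pow_lt; lra). assert (0 <= UU mu x ^ 2) by apply pow2_ge_0.
    assert (0 <= 2 * cq mu / x ^ 3) by (apply Rdiv_le_0_compat; lra).
    replace (- 2 * cq mu / x ^ 3 * UU mu x ^ 2) with (- (2 * cq mu / x ^ 3 * UU mu x ^ 2)) by (field; lra).
    assert (0 <= 2 * cq mu / x ^ 3 * UU mu x ^ 2) by (apply Rmult_le_pos; lra). lra.
Qed.

Lemma F_inc mu s t : -1/2 <= mu <= 1/2 -> 0 < s <= t -> FF mu s <= FF mu t.
Proof.
  intros Hm Hst.
  apply (mono_inc (FF mu) (fun t => U1 mu t ^ 2 * (2 * cq mu / t ^ 3) / qq mu t ^ 2)); [lra| |].
  - intros x Hx. assert (0 < x) by lra. unfold FF. pose proof (qq_ge1 mu x Hm H).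
    eapply D_ext. apply D_plus.
    apply (D_mult (fun t => U1 mu t ^ 2) (fun t => / qq mu t)).
    apply D_sq; apply (dU1 mu); lra.
    apply is_derive_inv. apply dqq; auto. lra.
    apply D_sq; apply (dU mu); lra.
    intros; reflexivity. field. lra.
  - intros x Hx. assert (0 < x) by lra. pose proof (cq_range mu Hm). pose proof (qq_ge1 mu x Hm H).
    assert (0 < x ^ 3) by (apply pow_lt; lra).
    apply Rdiv_le_0_compat. apply Rmult_le_pos. apply pow2_ge_0. apply Rdiv_le_0_compat; lra.
    apply pow_lt; lra.
Qed.


Lemma J_eq mu x : 0 < x -> besselJ mu x = Rpower (/ 2) mu * UU mu x / sqrt x.
Proof.
  intros Hx. unfold besselJ, UU.
  assert (E1 : Series (fun k => (-1) ^ k / (INR (Factorial.fact k) * Gamma (INR k + mu + 1)) * (x / 2) ^ (2 * k))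
     = SS mu (x ^ 2 / 4)).
  { unfold SS, PSeries. apply Series_ext. intros k. unfold cc. rewrite pow_mult.
    replace ((x / 2) ^ 2) with (x ^ 2 / 4) by field. reflexivity. }
  rewrite E1.
  replace (x / 2) with (x * / 2) by reflexivity.
  rewrite <- Rpower_mult_distr by lra.
  replace (1 / 2 + mu) with (/ 2 + mu) by field. rewrite Rpower_plus, Rpower_sqrt by lra.
  assert (0 < sqrt x) by (apply sqrt_lt_R0; lra).
  generalize (Rpower x mu) (Rpower (/2) mu) (SS mu (x ^ 2 / 4)). intros. field. lra.
Qed.

Lemma K_pos mu : 0 < Rpower (/ 2) mu.
Proof. apply exp_pos. Qed.

Lemma J_zero_iff mu x : 0 < x -> (besselJ mu x = 0 <-> UU mu x = 0).
Proof.
  intros Hx. rewrite J_eq by auto. pose proof (K_pos mu). assert (0 < sqrt x) by (apply sqrt_lt_R0; lra).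
  split; intros H1.
  - assert (E : UU mu x = (Rpower (/ 2) mu * UU mu x / sqrt x) * sqrt x / Rpower (/ 2) mu) by (field; lra).
    rewrite H1 in E. lra.
  - rewrite H1. unfold Rdiv; ring.
Qed.

Lemma U_nz_near0 mu : -1/2 <= mu <= 1/2 -> exists x0, 0 < x0 /\ forall t, 0 < t <= x0 -> UU mu t <> 0.
Proof.
  intros Hm. assert (H0 : SS mu 0 <> 0). { unfold SS. rewrite PSeries_0. apply cc_neq0. lra. }
  destruct (cont_eps (SS mu) 0 (Rabs (SS mu 0)) (cS mu 0 ltac:(lra))) as [d [Hd Hd2]].
  apply Rabs_pos_lt; auto.
  exists (Rmin 1 d). split. apply Rmin_pos; lra.
  intros t Ht. unfold UU. apply Rmult_integral_contrapositive_currified. apply Rgt_not_eq, Rpower_pos.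
  assert (Ht1 : t <= 1) by (pose proof (Rmin_l 1 d); lra).
  assert (Htd : t <= d) by (pose proof (Rmin_r 1 d); lra).
  assert (Rabs (t ^ 2 / 4 - 0) < d).
  { rewrite Rminus_0_r, Rabs_right. simpl. nra. assert (0 <= t^2) by apply pow2_ge_0. lra. }
  apply Hd2 in H. intro Hz. rewrite Hz, Rminus_0_l, Rabs_Ropp in H. lra.
Qed.

Lemma simple_zero mu z : -1/2 <= mu <= 1/2 -> 0 < z -> UU mu z = 0 -> U1 mu z <> 0.
Proof.
  intros Hm Hz HU H1. destruct (U_nz_near0 mu Hm) as [x0 [Hx0 Hnz]].
  set (t := Rmin x0 z). assert (Ht : 0 < t <= z) by (split; [apply Rmin_pos|apply Rmin_r]; lra).
  pose proof (F_inc mu t z Hm Ht) as HF. unfold FF in HF. rewrite HU, H1 in HF.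
  pose proof (qq_ge1 mu t Hm ltac:(lra)).
  assert (0 <= U1 mu t ^ 2 / qq mu t) by (apply Rdiv_le_0_compat; [apply pow2_ge_0|lra]).
  assert (0 ^ 2 / qq mu z + 0 ^ 2 = 0) by (simpl; unfold Rdiv; ring).
  assert (UU mu t ^ 2 <= 0) by lra.
  assert (UU mu t = 0) by nra.
  apply (Hnz t); auto. split; [lra| apply Rmin_l].
Qed.

Lemma qq_dec mu s t : -1/2 <= mu <= 1/2 -> 0 < s <= t -> qq mu t <= qq mu s.
Proof.
  intros Hm Hst. unfold qq. pose proof (cq_range mu Hm). unfold cq in H.
  assert (0 < s ^ 2) by (apply pow_lt; lra). assert (s ^ 2 <= t ^ 2) by (simpl; nra).
  assert ((1/4 - mu^2) / t ^ 2 <= (1/4 - mu^2) / s ^ 2).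
  { unfold Rdiv. apply Rmult_le_compat_l. lra. apply Rinv_le_contravar; lra. }
  lra.
Qed.

Lemma mvt (f df : R -> R) a b : (forall t, Rmin a b <= t <= Rmax a b -> is_derive f t (df t)) ->
  exists c, Rmin a b <= c <= Rmax a b /\ f b - f a = df c * (b - a).
Proof.
  intros Hd. apply MVT_gen. intros; apply Hd; lra. intros; apply (D_contpt _ _ _ (Hd x H)).
Qed.

Lemma spacing mu x0 : -1/2 <= mu <= 1/2 -> 0 < x0 -> (forall t, 0 < t <= x0 -> UU mu t <> 0) ->
  forall z1 z2, 0 < z1 < z2 -> UU mu z1 = 0 -> UU mu z2 = 0 -> 1 / (1 + qq mu x0) <= z2 - z1.
Proof.
  intros Hm Hx0 Hnz z1 z2 Hz H1 H2.
  assert (Hz1 : x0 < z1). { destruct (Rle_lt_dec z1 x0); auto. exfalso; apply (Hnz z1); auto; lra. }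
  set (Q := qq mu x0). assert (HQ : 1 <= Q) by (apply qq_ge1; lra).
  destruct (Rle_lt_dec (1 / (1 + Q)) (z2 - z1)) as [|HL]; auto. exfalso.
  set (g := fun t => Rabs (UU mu t) + Rabs (U1 mu t)).
  assert (Hg : forall c, z1 <= c <= z2 -> continuity_pt g c).
  { intros c Hc. apply (continuity_pt_plus (fun t => Rabs (UU mu t)) (fun t => Rabs (U1 mu t))).
    apply (continuity_pt_comp (UU mu) Rabs). apply continuity_pt_filterlim, cU; lra. apply Rcontinuity_abs.
    apply (continuity_pt_comp (U1 mu) Rabs). apply continuity_pt_filterlim, cU1; lra. apply Rcontinuity_abs. }
  destruct (continuity_ab_maj g z1 z2 ltac:(lra) Hg) as [Mx [HMx HMxI]].
  set (M := g Mx).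
  assert (Hgnn : forall t, 0 <= Rabs (UU mu t) /\ 0 <= Rabs (U1 mu t)) by (intros; split; apply Rabs_pos).
  assert (HM0 : 0 < M).
  { pose proof (HMx z1 ltac:(lra)). unfold g in H. pose proof (simple_zero mu z1 Hm ltac:(lra) H1).
    pose proof (Rabs_pos_lt _ H0). pose proof (Hgnn z1). unfold M, g. lra. }
  destruct (mvt (UU mu) (U1 mu) z1 z2) as [xi [Hxi Exi]].
  { intros t Ht. apply dU; rewrite Rmin_left in Ht; lra. }
  rewrite Rmin_left, Rmax_right in Hxi by lra. rewrite H1, H2 in Exi.
  assert (HU1xi : U1 mu xi = 0) by (apply Rmult_eq_reg_r with (z2 - z1); lra).
  destruct (mvt (UU mu) (U1 mu) z1 Mx) as [c1 [Hc1 Ec1]].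
  { intros t Ht. apply dU. lra. pose proof (Rmin_glb_lt z1 Mx 0 ltac:(lra) ltac:(lra)). lra. }
  assert (Hc1' : z1 <= c1 <= z2).
  { split. apply Rle_trans with (Rmin z1 Mx); [apply Rmin_glb|]; lra.
    apply Rle_trans with (Rmax z1 Mx); [|apply Rmax_lub]; lra. }
  destruct (mvt (U1 mu) (fun t => - qq mu t * UU mu t) xi Mx) as [c2 [Hc2 Ec2]].
  { intros t Ht. apply dU1. lra. pose proof (Rmin_glb_lt xi Mx 0 ltac:(lra) ltac:(lra)). lra. }
  assert (Hc2' : z1 <= c2 <= z2).
  { split. apply Rle_trans with (Rmin xi Mx); [apply Rmin_glb|]; lra.
    apply Rle_trans with (Rmax xi Mx); [|apply Rmax_lub]; lra. }
  rewrite H1, HU1xi in *.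
  assert (A1 : Rabs (UU mu Mx) <= M * (z2 - z1)).
  { replace (UU mu Mx) with (U1 mu c1 * (Mx - z1)) by lra. rewrite Rabs_mult.
    apply Rmult_le_compat; try apply Rabs_pos.
    pose proof (HMx c1 Hc1'). unfold g in H. pose proof (Hgnn c1). unfold M, g. lra.
    rewrite Rabs_right; lra. }
  assert (Hqc2 : 0 < qq mu c2 <= Q).
  { split. pose proof (qq_ge1 mu c2 Hm ltac:(lra)); lra. apply qq_dec; lra. }
  assert (A2 : Rabs (U1 mu Mx) <= Q * M * (z2 - z1)).
  { replace (U1 mu Mx) with (- qq mu c2 * UU mu c2 * (Mx - xi)) by lra.
    rewrite !Rabs_mult, Rabs_Ropp, (Rabs_right (qq mu c2)) by lra.
    apply Rmult_le_compat; try apply Rabs_pos.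
    apply Rmult_le_pos; [lra|apply Rabs_pos].
    apply Rmult_le_compat; try lra; try apply Rabs_pos.
    pose proof (HMx c2 Hc2'). unfold g in H. pose proof (Hgnn c2). unfold M, g. lra.
    apply Rabs_le. lra. }
  assert (M <= (1 + Q) * (z2 - z1) * M) by (unfold M at 1; unfold g; nra).
  assert ((1 + Q) * (z2 - z1) < 1).
  { apply Rmult_lt_reg_r with (/ (1 + Q)). apply Rinv_0_lt_compat; lra.
    replace ((1 + Q) * (z2 - z1) * / (1 + Q)) with (z2 - z1) by (field; lra). lra. }
  nra.
Qed.

Lemma Rmax_abs a t : (a + t + Rabs (t - a)) / 2 = Rmax a t.
Proof. unfold Rmax. destruct (Rle_dec a t); [rewrite Rabs_right|rewrite Rabs_left]; lra. Qed.

Lemma ivt_U mu t0 a b : -1/2 <= mu -> 0 < t0 -> t0 <= a -> t0 <= b -> UU mu a <= 0 <= UU mu b \/ UU mu b <= 0 <= UU mu a ->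
  exists x, Rmin a b <= x <= Rmax a b /\ UU mu x = 0.
Proof.
  intros Hm Ht0 Ha Hb Hs.
  set (g := fun t => UU mu ((t0 + t + Rabs (t - t0)) / 2)).
  assert (Hg : forall t, t0 <= t -> g t = UU mu t).
  { intros t Ht; unfold g; rewrite Rmax_abs, Rmax_right; auto. }
  assert (Hc : continuity g).
  { intros t. apply continuity_pt_filterlim. unfold g.
    apply (C_comp (fun t => (t0 + t + Rabs (t - t0)) / 2) (UU mu)).
    - apply (C_mult (fun t => t0 + t + Rabs (t - t0)) (fun _ => / 2)); [|apply C_const].
      apply C_plus. apply C_plus. apply C_const. apply C_id.
      apply (C_comp (fun t => t - t0) Rabs). apply C_minus. apply C_id. apply C_const.
      apply continuity_pt_filterlim. apply Rcontinuity_abs.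
    - apply cU; auto. rewrite Rmax_abs. pose proof (Rmax_l t0 t). lra. }
  destruct (IVT_gen g a b 0 Hc) as [x [Hx Hgx]].
  - rewrite !Hg by auto. unfold Rmin, Rmax. destruct (Rle_dec (UU mu a) (UU mu b)); lra.
  - exists x. split; auto. rewrite <- Hg; auto.
    apply Rle_trans with (Rmin a b); [apply Rmin_glb|]; lra.
Qed.

Lemma sturm mu t0 : -1/2 <= mu <= 1/2 -> 0 < t0 -> exists z, t0 <= z <= t0 + PI /\ UU mu z = 0.
Proof.
  intros Hm Ht0. apply NNPP. intros Hno.
  assert (Hnz : forall t, t0 <= t <= t0 + PI -> UU mu t <> 0).
  { intros t Ht HU. apply Hno. exists t; auto. }
  pose proof PI_RGT_0 as HPI.
  set (sg := if Rlt_dec 0 (UU mu t0) then 1 else -1).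
  assert (Hsg : sg * sg = 1) by (unfold sg; destruct Rlt_dec; lra).
  assert (Hpos : forall t, t0 <= t <= t0 + PI -> 0 < sg * UU mu t).
  { intros t Ht. destruct (Rlt_dec 0 (sg * UU mu t)) as [|Hn]; auto. exfalso.
    assert (Hne := Hnz t Ht). assert (Hne0 := Hnz t0 ltac:(lra)).
    destruct (ivt_U mu t0 t0 t ltac:(lra) Ht0 ltac:(lra) ltac:(lra)) as [x [Hx Hx0]].
    - unfold sg in Hn. destruct (Rlt_dec 0 (UU mu t0)).
      + right. split; [|lra]. lra.
      + left. split; [|lra]. lra.
    - rewrite Rmin_left, Rmax_right in Hx by lra. apply (Hnz x); auto. lra. }
  set (W := fun t => sg * (U1 mu t * sin (t - t0) - UU mu t * cos (t - t0))).
  assert (HW : W (t0 + PI) <= W t0).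
  { apply (mono_dec W (fun t => sg * ((1 - qq mu t) * UU mu t * sin (t - t0)))); [lra| |].
    - intros t Ht. unfold W.
      assert (Ds : is_derive (fun t => sin (t - t0)) t (cos (t - t0))).
      { eapply D_ext. apply (D_comp sin (fun t => t - t0)). apply is_derive_sin.
        eapply D_ext. apply D_minus. apply D_id. apply D_const. intros; reflexivity. reflexivity.
        intros; reflexivity. ring. }
      assert (Dc : is_derive (fun t => cos (t - t0)) t (- sin (t - t0))).
      { eapply D_ext. apply (D_comp cos (fun t => t - t0)). apply is_derive_cos.
        eapply D_ext. apply D_minus. apply D_id. apply D_const. intros; reflexivity. reflexivity.
        intros; reflexivity. ring. }
      eapply D_ext. apply (D_mult (fun _ => sg)). apply D_const.
      apply D_minus. apply D_mult. apply (dU1 mu); lra. exact Ds. apply D_mult. apply (dU mu); lra. exact Dc.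
      intros; reflexivity. cbv beta. ring.
    - intros t Ht. pose proof (Hpos t Ht). pose proof (qq_ge1 mu t Hm ltac:(lra)).
      assert (0 <= sin (t - t0)) by (apply sin_ge_0; lra).
      replace (sg * ((1 - qq mu t) * UU mu t * sin (t - t0))) with
        ((1 - qq mu t) * (sg * UU mu t) * sin (t - t0)) by ring.
      assert (0 <= (qq mu t - 1) * (sg * UU mu t)) by (apply Rmult_le_pos; lra).
      assert (0 <= (qq mu t - 1) * (sg * UU mu t) * sin (t - t0)) by (apply Rmult_le_pos; lra).
      lra. }
  unfold W in HW. replace (t0 + PI - t0) with PI in HW by ring. rewrite Rminus_diag in HW.
  rewrite sin_PI, cos_PI, sin_0, cos_0 in HW.
  pose proof (Hpos t0 ltac:(lra)). pose proof (Hpos (t0 + PI) ltac:(lra)). nra.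
Qed.

Definition isZ mu z := 0 < z /\ UU mu z = 0.

Lemma spacing' mu : -1/2 <= mu <= 1/2 -> exists x0 d, 0 < x0 /\ 0 < d /\
  (forall z, isZ mu z -> x0 < z) /\ (forall z1 z2, isZ mu z1 -> isZ mu z2 -> z1 < z2 -> d <= z2 - z1).
Proof.
  intros Hm. destruct (U_nz_near0 mu Hm) as [x0 [Hx0 Hnz]].
  exists x0, (1 / (1 + qq mu x0)). pose proof (qq_ge1 mu x0 Hm Hx0).
  split; auto. split. apply Rdiv_lt_0_compat; lra. split.
  - intros z [Hz HU]. destruct (Rle_lt_dec z x0); auto. exfalso; apply (Hnz z); auto.
  - intros z1 z2 [H1 H1'] [H2 H2'] H12. apply (spacing mu x0); auto.
Qed.

Lemma next_zero mu s : -1/2 <= mu <= 1/2 -> 0 <= s ->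
  exists z, isZ mu z /\ s < z /\ forall w, isZ mu w -> s < w -> z <= w.
Proof.
  intros Hm Hs. destruct (spacing' mu Hm) as [x0 [d [Hx0 [Hd [Hgt Hsp]]]]].
  set (B := fun y => exists w, isZ mu w /\ s < w /\ y = - w).
  assert (HB1 : bound B). { exists (- s). intros y [w [_ [Hw ->]]]. lra. }
  assert (HB2 : exists y, B y).
  { destruct (sturm mu (s + 1) Hm ltac:(lra)) as [z [Hz HU]]. exists (- z). exists z.
    split; [split|split]; auto; lra. }
  destruct (completeness B HB1 HB2) as [L [HL1 HL2]].
  assert (Hlow : forall w, isZ mu w -> s < w -> - L <= w).
  { intros w Hw Hsw. assert (B (- w)) by (exists w; auto). apply HL1 in H. lra. }
  assert (Hex : exists w, isZ mu w /\ s < w /\ w < - L + d / 2).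
  { apply NNPP. intros Hn. assert (L <= - (- L + d / 2)); [|lra].
    apply HL2. intros y [w [Hw [Hsw ->]]].
    destruct (Rlt_le_dec w (- L + d / 2)). exfalso; apply Hn; exists w; auto. lra. }
  destruct Hex as [w [Hw [Hsw Hwl]]]. exists w. split; auto. split; auto.
  intros w' Hw' Hsw'. destruct (Rle_lt_dec w w') as [|Hlt]; auto. exfalso.
  pose proof (Hsp w' w Hw' Hw Hlt). pose proof (Hlow w' Hw' Hsw'). lra.
Qed.

Lemma zeros_enum mu n : -1/2 <= mu <= 1/2 -> exists j l, isZ mu j /\ NoDup l /\ length l = n /\
  forall x, In x l <-> (0 < x < j /\ UU mu x = 0).
Proof.
  intros Hm. induction n as [|n IH].
  - destruct (next_zero mu 0 Hm ltac:(lra)) as [z [Hz [_ Hmin]]]. exists z, nil.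
    split; auto. split. constructor. split; auto. intros x; split. intros [].
    intros [Hx HU]. pose proof (Hmin x (conj (proj1 Hx) HU) (proj1 Hx)). lra.
  - destruct IH as [j [l [Hj [Hnd [Hlen Hin]]]]].
    destruct (next_zero mu j Hm ltac:(destruct Hj; lra)) as [z [Hz [Hjz Hmin]]].
    exists z, (j :: l). split; auto. split.
    + constructor; auto. intros Hjl. apply Hin in Hjl. lra.
    + split. simpl; auto. intros x. simpl. split.
      * intros [<-|Hx]. destruct Hj; split; [lra|auto]. apply Hin in Hx. lra.
      * intros [Hx HU]. destruct (Rtotal_order x j) as [Hl|[He|Hg]].
        right; apply Hin; split; [lra|auto]. left; auto.
        exfalso. pose proof (Hmin x (conj (proj1 Hx) HU) Hg). lra.
Qed.

Lemma bz_spec mu n : -1/2 <= mu <= 1/2 -> is_nth_pos_zero mu n (bessel_zero mu n).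
Proof.
  intros Hm. unfold bessel_zero. apply epsilon_spec.
  destruct (zeros_enum mu (n - 1) Hm) as [j [l [[Hj HU] [Hnd [Hlen Hin]]]]].
  exists j. split; auto. split. apply J_zero_iff; auto.
  exists l. split; auto. split; auto. intros x. rewrite Hin. split; intros [Hx H]; split; auto.
  apply J_zero_iff; auto; lra. apply J_zero_iff in H; auto; lra.
Qed.

Lemma list_max (l : list R) : l <> nil -> exists m, In m l /\ forall x, In x l -> x <= m.
Proof.
  induction l as [|a l IH]; intros H. congruence.
  destruct l as [|b l'].
  - exists a. split; [left; auto|]. intros x [<-|[]]; lra.
  - destruct IH as [m [Hm Hmax]]. discriminate.
    exists (Rmax a m). split.
    + unfold Rmax; destruct Rle_dec; [right; auto|left; auto].
    + intros x [<-|Hx]. apply Rmax_l. apply Rle_trans with m; [apply Hmax; auto|apply Rmax_r].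
Qed.

Lemma count_spaced x0 d : 0 < d -> forall n (l : list R) T, length l = n -> NoDup l ->
  (forall x, In x l -> x0 <= x <= T) -> (forall x y, In x l -> In y l -> x < y -> d <= y - x) ->
  INR n * d <= Rmax 0 (T - x0 + d).
Proof.
  intros Hd n. induction n as [|n IH]; intros l T Hlen Hnd Hr Hsp.
  - simpl. rewrite Rmult_0_l. apply Rmax_l.
  - destruct (list_max l) as [m [Hm Hmax]]. intros ->; discriminate.
    destruct (in_split m l Hm) as [l1 [l2 ->]].
    set (l' := l1 ++ l2).
    assert (Hnd' : NoDup l') by (apply NoDup_remove_1 in Hnd; auto).
    assert (Hnm : ~ In m l') by (apply NoDup_remove_2 in Hnd; auto).
    assert (Hsub : forall x, In x l' -> In x (l1 ++ m :: l2)).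
    { intros x Hx. apply in_app_or in Hx. apply in_or_app. destruct Hx; [left|right; right]; auto. }
    assert (Hlen' : length l' = n).
    { unfold l'. rewrite length_app. rewrite length_app in Hlen. simpl in Hlen. lia. }
    pose proof (Hr m Hm) as Hmr.
    assert (IH' := IH l' (m - d) Hlen' Hnd').
    assert (Hle : INR n * d <= Rmax 0 (m - d - x0 + d)).
    { apply IH'.
      - intros x Hx. split. apply (Hr x (Hsub x Hx)).
        assert (x <> m) by (intro; subst; auto). pose proof (Hmax x (Hsub x Hx)).
        pose proof (Hsp x m (Hsub x Hx) Hm ltac:(lra)). lra.
      - intros x y Hx Hy Hxy. apply Hsp; auto. }
    rewrite Rmax_right in Hle by lra. rewrite S_INR.
    apply Rle_trans with (T - x0 + d); [|apply Rmax_r]. lra.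
Qed.


Lemma D_sqrt x : 0 < x -> is_derive sqrt x (/ (2 * sqrt x)).
Proof. intros; apply is_derive_Reals, derivable_pt_lim_sqrt; auto. Qed.

Lemma derive_J mu j : -1/2 <= mu <= 1/2 -> isZ mu j ->
  is_derive (besselJ mu) j (Rpower (/ 2) mu * U1 mu j / sqrt j).
Proof.
  intros Hm [Hj HU].
  apply (D_ext_loc (fun y => Rpower (/ 2) mu * UU mu y * / sqrt y)).
  - exists (mkposreal j Hj). intros y Hy. change (Rabs (y - j) < j) in Hy. apply Rabs_lt_between in Hy.
    rewrite J_eq by lra. reflexivity.
  - assert (0 < sqrt j) by (apply sqrt_lt_R0; lra).
    eapply D_ext. apply (D_mult (fun y => Rpower (/ 2) mu * UU mu y) (fun y => / sqrt y)).
    apply (D_mult (fun _ => Rpower (/ 2) mu) (UU mu)). apply D_const. apply dU; lra.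
    apply is_derive_inv. apply D_sqrt; auto. lra.
    intros; reflexivity. rewrite HU. field. lra.
Qed.

Definition kap (alpha : R) := (2 - alpha) / 2.

Lemma I_eq alpha mu j a b : 0 <= alpha < 1 -> -1/2 <= mu <= 1/2 -> isZ mu j -> 0 < a < b ->
  RInt (fun x => (sqrt (kappa_ alpha) / Rabs (Derive (besselJ mu) j) *
        (Rpower x ((1 - alpha) / 2) * besselJ mu (j * Rpower x (kappa_ alpha)))) ^ 2) a b
  = RInt (fun t => UU mu t ^ 2) (j * Rpower a (kappa_ alpha)) (j * Rpower b (kappa_ alpha)) / (j * U1 mu j ^ 2).
Proof.
  intros Ha Hm Hj Hab. set (k := kappa_ alpha).
  assert (Hk : 0 < k) by (unfold k, kappa_; lra).
  destruct Hj as [Hj0 HU] eqn:HjE.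
  assert (HU1 : U1 mu j <> 0) by (apply simple_zero; auto).
  set (K := Rpower (/ 2) mu). assert (HK : 0 < K) by apply K_pos.
  rewrite (is_derive_unique _ _ _ (derive_J mu j Hm ltac:(split; auto))). fold K.
  set (g := fun x => j * Rpower x k). set (dg := fun x => j * (k * Rpower x (k - 1))).
  set (c := / (j * U1 mu j ^ 2)).
  assert (Hg : forall x, 0 < x -> is_derive g x (dg x)).
  { intros x Hx. unfold g, dg. eapply D_ext. apply (D_mult (fun _ => j) (fun x => Rpower x k)).
    apply D_const. apply is_derive_Rpower; auto. intros; reflexivity. ring. }
  assert (Hpt : forall x, a < x < b ->
     (sqrt k / Rabs (K * U1 mu j / sqrt j) * (Rpower x ((1 - alpha) / 2) * besselJ mu (j * Rpower x k))) ^ 2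
     = c * (dg x * UU mu (g x) ^ 2)).
  { intros x Hx. assert (Hx0 : 0 < x) by lra.
    assert (HQ : 0 < Rpower x k) by apply Rpower_pos.
    assert (Hy : 0 < j * Rpower x k) by (apply Rmult_lt_0_compat; lra).
    rewrite J_eq by auto. fold K. unfold c, dg, g.
    assert (HP : Rpower x ((1 - alpha) / 2) ^ 2 = Rpower x (k - 1) * Rpower x k).
    { simpl. rewrite Rmult_1_r, <- !Rpower_plus. f_equal. unfold k, kappa_. field. }
    assert (Hsk : sqrt k ^ 2 = k) by (simpl; rewrite Rmult_1_r; apply sqrt_sqrt; lra).
    assert (Hsj : sqrt j ^ 2 = j) by (simpl; rewrite Rmult_1_r; apply sqrt_sqrt; lra).
    assert (Hsy : sqrt (j * Rpower x k) ^ 2 = j * Rpower x k) by (simpl; rewrite Rmult_1_r; apply sqrt_sqrt; lra).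
    assert (Habs : Rabs (K * U1 mu j / sqrt j) ^ 2 = (K * U1 mu j / sqrt j) ^ 2) by apply pow2_abs.
    assert (0 < sqrt j) by (apply sqrt_lt_R0; lra).
    assert (0 < sqrt (j * Rpower x k)) by (apply sqrt_lt_R0; lra).
    assert (Habs0 : Rabs (K * U1 mu j / sqrt j) <> 0).
    { apply Rabs_no_R0. unfold Rdiv. apply Rmult_integral_contrapositive_currified.
      apply Rmult_integral_contrapositive_currified; lra. apply Rinv_neq_0_compat; lra. }
    rewrite !Rpow_mult_distr.
    replace ((sqrt k / Rabs (K * U1 mu j / sqrt j)) ^ 2) with (sqrt k ^ 2 / Rabs (K * U1 mu j / sqrt j) ^ 2)
      by (field; auto).
    replace ((K * UU mu (j * Rpower x k) / sqrt (j * Rpower x k)) ^ 2) with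
      (K ^ 2 * UU mu (j * Rpower x k) ^ 2 / sqrt (j * Rpower x k) ^ 2) by (field; lra).
    rewrite Hsk, Habs, HP, Hsy.
    replace ((K * U1 mu j / sqrt j) ^ 2) with (K ^ 2 * U1 mu j ^ 2 / sqrt j ^ 2) by (field; lra).
    rewrite Hsj.
    generalize (UU mu (j * Rpower x k)) (Rpower x (k - 1)). intros V R1.
    generalize dependent (Rpower x k). intros Q HQ Hy Hsy H0 Hmm.
    field. repeat split; try lra; try (apply pow_nonzero; auto). }
  rewrite (RI_ext _ (fun x => c * (dg x * UU mu (g x) ^ 2))).
  2: { intros x Hx. rewrite Rmin_left, Rmax_right in Hx by lra. apply Hpt; auto. }
  assert (Hcomp : forall x, Rmin a b <= x <= Rmax a b -> continuous (fun t => UU mu t ^ 2) (g x)).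
  { intros x Hx. rewrite Rmin_left, Rmax_right in Hx by lra.
    assert (0 < g x) by (unfold g; apply Rmult_lt_0_compat; [lra|apply Rpower_pos]).
    apply (D_cont _ _ _ (D_sq _ _ _ (dU mu (g x) ltac:(lra) H))). }
  assert (Hdg : forall x, Rmin a b <= x <= Rmax a b -> is_derive g x (dg x) /\ continuous dg x).
  { intros x Hx. rewrite Rmin_left, Rmax_right in Hx by lra. split. apply Hg; lra.
    unfold dg. apply C_mult. apply C_const. apply C_mult. apply C_const. apply continuous_Rpower; lra. }
  pose proof (is_RInt_comp (V := R_CompleteNormedModule) (fun t => UU mu t ^ 2) g dg a b Hcomp Hdg) as HI.
  rewrite RI_scal. 2: { eexists; exact HI. }
  assert (E : RInt (fun x => dg x * UU mu (g x) ^ 2) a b = RInt (fun t => UU mu t ^ 2) (g a) (g b))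
    by (apply is_RInt_unique; exact HI).
  rewrite E. unfold c, g. unfold Rdiv. apply Rmult_comm.
Qed.

Lemma cqq mu t : -1/2 <= mu <= 1/2 -> 0 < t -> continuous (qq mu) t.
Proof. intros. apply (D_cont _ _ _ (dqq mu t H0)). Qed.

Lemma R_large mu A B j : -1/2 <= mu <= 1/2 -> 0 < A < B -> B < 1 -> isZ mu j -> 1/2 <= j * A -> 6 <= (B - A) * j ->
  (B - A) / 8 <= RInt (fun t => UU mu t ^ 2) (j * A) (j * B) / (j * U1 mu j ^ 2).
Proof.
  intros Hm HAB HB1 [Hj HU] HAj HBA.
  set (D := U1 mu j ^ 2).
  assert (HD : 0 < D) by (unfold D; apply pow2_gt_0; apply simple_zero; auto).
  set (s1 := j * A). set (s2 := j * B).
  assert (Hs : 0 < s1 < s2 /\ s2 < j) by (unfold s1, s2; split; [split|]; nra).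
  assert (HE : forall t, s1 <= t <= s2 -> D <= EE mu t).
  { intros t Ht. pose proof (E_dec mu t j Hm ltac:(lra)). unfold EE in H at 1. rewrite HU in H.
    unfold D. simpl in H |- *. lra. }
  assert (Hq2 : forall t, s1 <= t <= s2 -> 1 <= qq mu t <= 2).
  { intros t Ht. split. apply qq_ge1; lra.
    apply Rle_trans with (qq mu s1). apply qq_dec; lra.
    unfold qq. pose proof (cq_range mu Hm). unfold cq in H.
    assert (1/2 <= s1) by (unfold s1; lra). assert (1/4 <= s1 ^ 2) by (simpl; nra).
    assert ((1/4 - mu ^ 2) / s1 ^ 2 <= 1).
    { apply Rmult_le_reg_r with (s1 ^ 2). lra. unfold Rdiv. rewrite Rmult_assoc, Rinv_l by lra. lra. }
    lra. }
  assert (HF : forall t, s1 <= t <= s2 -> UU mu t ^ 2 <= D /\ U1 mu t ^ 2 <= 2 * D).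
  { intros t Ht. pose proof (F_inc mu t j Hm ltac:(lra)). unfold FF in H. rewrite HU in H.
    pose proof (Hq2 t Ht). pose proof (qq_ge1 mu j Hm Hj).
    assert (0 <= U1 mu t ^ 2) by apply pow2_ge_0. assert (0 <= UU mu t ^ 2) by apply pow2_ge_0.
    assert (U1 mu t ^ 2 / qq mu t + UU mu t ^ 2 <= D).
    { eapply Rle_trans; [exact H|]. replace (0 ^ 2) with 0 by (simpl; ring). unfold D. rewrite Rplus_0_r.
      unfold Rdiv. apply Rle_trans with (U1 mu j ^ 2 * 1). apply Rmult_le_compat_l. apply pow2_ge_0.
      rewrite <- Rinv_1. apply Rinv_le_contravar; lra. lra. }
    assert (0 <= U1 mu t ^ 2 / qq mu t) by (apply Rdiv_le_0_compat; lra).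
    split. lra.
    assert (U1 mu t ^ 2 = qq mu t * (U1 mu t ^ 2 / qq mu t)) by (field; lra). nra. }
  assert (Hc : forall t, s1 <= t <= s2 -> continuous (UU mu) t /\ continuous (U1 mu) t /\ continuous (qq mu) t).
  { intros t Ht. split; [apply cU|split; [apply cU1|apply cqq]]; lra. }
  assert (Hex : forall f : R -> R, (forall t, s1 <= t <= s2 -> continuous f t) -> ex_RInt f s1 s2).
  { intros f Hf. apply RI_ex_cont. intros x Hx. rewrite Rmin_left, Rmax_right in Hx by lra. apply Hf; auto. }
  assert (CU2 : forall t, s1 <= t <= s2 -> continuous (fun t => UU mu t ^ 2) t).
  { intros t Ht. destruct (Hc t Ht) as [H1 [H2 H3]]. apply (C_ext (fun t => UU mu t * (UU mu t * 1))).
    intros; simpl; auto. apply C_mult; auto. apply C_mult; auto. apply C_const. }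
  assert (CU12 : forall t, s1 <= t <= s2 -> continuous (fun t => U1 mu t ^ 2) t).
  { intros t Ht. destruct (Hc t Ht) as [H1 [H2 H3]]. apply (C_ext (fun t => U1 mu t * (U1 mu t * 1))).
    intros; simpl; auto. apply C_mult; auto. apply C_mult; auto. apply C_const. }
  assert (CqU : forall t, s1 <= t <= s2 -> continuous (fun t => qq mu t * UU mu t ^ 2) t).
  { intros t Ht. apply C_mult. apply (Hc t Ht). apply CU2; auto. }
  assert (Id : RInt (fun t => U1 mu t ^ 2 - qq mu t * UU mu t ^ 2) s1 s2 =
     UU mu s2 * U1 mu s2 - UU mu s1 * U1 mu s1).
  { apply (RInt_deriv (fun t => UU mu t * U1 mu t)).
    - intros x Hx. rewrite Rmin_left, Rmax_right in Hx by lra.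
      eapply D_ext. apply D_mult. apply (dU mu); lra. apply (dU1 mu); lra. intros; reflexivity. ring.
    - intros x Hx. rewrite Rmin_left, Rmax_right in Hx by lra. apply C_minus. apply CU12; auto. apply CqU; auto. }
  assert (HEi : (s2 - s1) * D <= RInt (EE mu) s1 s2).
  { rewrite <- RI_const. apply RInt_le. lra. apply Hex. intros; apply C_const.
    apply Hex. intros t Ht. unfold EE. apply C_plus. apply CU12; auto. apply CqU; auto.
    intros t Ht. apply HE; lra. }
  assert (HEsplit : RInt (EE mu) s1 s2 = RInt (fun t => U1 mu t ^ 2 - qq mu t * UU mu t ^ 2) s1 s2
     + 2 * RInt (fun t => qq mu t * UU mu t ^ 2) s1 s2).
  { rewrite <- RI_scal by (apply Hex; auto). rewrite <- RI_plus.
    apply RI_ext. intros; unfold EE; ring.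
    apply Hex. intros. apply C_minus. apply CU12; auto. apply CqU; auto.
    apply Hex. intros. apply C_mult. apply C_const. apply CqU; auto. }
  assert (Hq2i : RInt (fun t => qq mu t * UU mu t ^ 2) s1 s2 <= 2 * RInt (fun t => UU mu t ^ 2) s1 s2).
  { rewrite <- RI_scal by (apply Hex; auto). apply RInt_le. lra. apply Hex; auto.
    apply Hex. intros. apply C_mult. apply C_const. apply CU2; auto.
    intros t Ht. pose proof (Hq2 t ltac:(lra)). assert (0 <= UU mu t ^ 2) by apply pow2_ge_0. nra. }
  assert (Hbd : forall t, s1 <= t <= s2 -> UU mu t * U1 mu t <= 3 * D / 2).
  { intros t Ht. destruct (HF t Ht). assert (0 <= (UU mu t - U1 mu t) ^ 2) by apply pow2_ge_0.
    simpl in *. nra. }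
  assert (Hbd' : forall t, s1 <= t <= s2 -> - (3 * D / 2) <= UU mu t * U1 mu t).
  { intros t Ht. destruct (HF t Ht). assert (0 <= (UU mu t + U1 mu t) ^ 2) by apply pow2_ge_0.
    simpl in *. nra. }
  pose proof (Hbd s2 ltac:(lra)). pose proof (Hbd' s1 ltac:(lra)).
  assert (Hmain : (s2 - s1) * D / 8 <= RInt (fun t => UU mu t ^ 2) s1 s2).
  { assert (s2 - s1 = (B - A) * j) by (unfold s1, s2; ring). nra. }
  assert (Hjd : 0 < j * D) by (apply Rmult_lt_0_compat; lra).
  fold D. apply Rmult_le_reg_r with (j * D); auto. unfold Rdiv at 2. rewrite Rmult_assoc, Rinv_l, Rmult_1_r by lra.
  replace ((B - A) / 8 * (j * D)) with ((s2 - s1) * D / 8) by (unfold s1, s2; field). auto.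
Qed.

Lemma R_pos mu A B j : -1/2 <= mu <= 1/2 -> 0 < A < B -> isZ mu j ->
  0 < RInt (fun t => UU mu t ^ 2) (j * A) (j * B) / (j * U1 mu j ^ 2).
Proof.
  intros Hm HAB [Hj HU].
  assert (HD : 0 < U1 mu j ^ 2) by (apply pow2_gt_0; apply simple_zero; auto).
  apply Rdiv_lt_0_compat; [|apply Rmult_lt_0_compat; lra].
  set (s1 := j * A). set (s2 := j * B).
  assert (Hs : 0 < s1 < s2) by (unfold s1, s2; split; nra).
  assert (Hc : exists c, s1 <= c <= s2 /\ UU mu c <> 0).
  { destruct (Req_dec (UU mu s1) 0) as [H0|H0]; [|exists s1; split; [lra|auto]].
    destruct (spacing' mu Hm) as [x0 [d [Hx0 [Hd [_ Hsp]]]]].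
    set (c := s1 + Rmin (s2 - s1) d / 2).
    assert (0 < Rmin (s2 - s1) d) by (apply Rmin_pos; lra).
    pose proof (Rmin_l (s2 - s1) d). pose proof (Rmin_r (s2 - s1) d).
    assert (Hc1 : s1 < c) by (unfold c; lra). assert (Hc2 : c - s1 < d) by (unfold c; lra).
    assert (Hc3 : c <= s2) by (unfold c; lra).
    exists c. split. lra. intros Hc0.
    assert (Hz1 : isZ mu s1) by (split; lra). assert (Hz2 : isZ mu c) by (split; [lra|auto]).
    pose proof (Hsp s1 c Hz1 Hz2 Hc1). lra. }
  destruct Hc as [c [Hc Hcnz]].
  apply (RInt_pos _ s1 s2 c); try lra.
  - intros x Hx. apply (D_cont _ _ _ (D_sq _ _ _ (dU mu x ltac:(lra) ltac:(lra)))).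
  - intros; apply pow2_ge_0.
  - apply pow2_gt_0; auto.
Qed.


Definition Rv mu A B n := let j := bessel_zero mu n in
  RInt (fun t => UU mu t ^ 2) (j * A) (j * B) / (j * U1 mu j ^ 2).

Lemma bz_isZ mu n : -1/2 <= mu <= 1/2 -> isZ mu (bessel_zero mu n).
Proof.
  intros Hm. destruct (bz_spec mu n Hm) as [Hj [HJ _]]. split; auto. apply J_zero_iff; auto.
Qed.

Lemma large_n mu A B : -1/2 <= mu <= 1/2 -> 0 < A < B -> B < 1 ->
  exists N, forall n, (N <= n)%nat -> (B - A) / 8 <= Rv mu A B n.
Proof.
  intros Hm HAB HB.
  destruct (spacing' mu Hm) as [x0 [d [Hx0 [Hd [Hgt Hsp]]]]].
  set (J0 := Rmax (1 / (2 * A)) (6 / (B - A))).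
  assert (HJ0 : 0 < J0) by (apply Rlt_le_trans with (1 / (2 * A)); [apply Rdiv_lt_0_compat; lra| apply Rmax_l]).
  destruct (archimed ((J0 + 2 * d) / d)) as [Harch _].
  set (N := Z.to_nat (up ((J0 + 2 * d) / d))).
  assert (HN : (J0 + 2 * d) / d <= INR N).
  { unfold N. rewrite INR_IZR_INZ, Z2Nat.id. lra.
    apply le_IZR. assert (0 < (J0 + 2 * d) / d) by (apply Rdiv_lt_0_compat; lra). lra. }
  exists N. intros n Hn. unfold Rv.
  set (j := bessel_zero mu n).
  pose proof (bz_isZ mu n Hm) as Hz. fold j in Hz.
  destruct (bz_spec mu n Hm) as [Hj [HJ [l [Hnd [Hlen Hin]]]]]. fold j in Hj, HJ, Hin.
  assert (Hcount := count_spaced x0 d Hd (n - 1) l j Hlen Hnd).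
  assert (Hl : forall x, In x l -> isZ mu x).
  { intros x Hx. apply Hin in Hx. destruct Hx as [Hx HJx]. split. lra. apply J_zero_iff in HJx; auto; lra. }
  assert (Hc := Hcount ltac:(intros x Hx; pose proof (Hgt x (Hl x Hx)); apply Hin in Hx; lra)
     ltac:(intros x y Hx Hy Hxy; apply Hsp; auto)).
  assert (HNn : INR N - 1 <= INR (n - 1)).
  { destruct n as [|n']. simpl. assert (N = 0%nat) by lia. subst N. rewrite H. simpl. lra.
    replace (S n' - 1)%nat with n' by lia. rewrite <- (Rplus_0_r (INR n')).
    replace (INR N - 1) with (INR N - 1). assert (INR N <= INR (S n')) by (apply le_INR; lia).
    rewrite S_INR in H. lra. reflexivity. }
  assert (Hnd2 : J0 + d <= INR (n - 1) * d).
  { assert (J0 + 2 * d <= INR N * d).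
    { apply Rmult_le_reg_r with (/ d). apply Rinv_0_lt_compat; lra.
      rewrite Rmult_assoc, Rinv_r, Rmult_1_r by lra. apply HN. }
    nra. }
  assert (Hjbig : J0 < j).
  { unfold Rmax at 1 in Hc. destruct (Rle_dec 0 (j - x0 + d)); lra. }
  apply R_large; auto.
  - apply Rle_trans with (J0 * A). 
    + apply Rle_trans with (1 / (2 * A) * A). right; field; lra. apply Rmult_le_compat_r. lra. apply Rmax_l.
    + apply Rmult_le_compat_r; lra.
  - apply Rle_trans with ((B - A) * J0).
    + apply Rle_trans with ((B - A) * (6 / (B - A))). right; field; lra. apply Rmult_le_compat_l. lra. apply Rmax_r.
    + apply Rmult_le_compat_l; lra.
Qed.

Lemma fin_min (f : nat -> R) N : (forall m, (1 <= m)%nat -> 0 < f m) ->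
  exists d, 0 < d /\ forall m, (1 <= m <= N)%nat -> d <= f m.
Proof.
  intros Hf. induction N as [|N [d [Hd IH]]].
  - exists 1. split. lra. intros m Hm. lia.
  - exists (Rmin d (f (S N))). split. apply Rmin_pos; auto. apply Hf; lia.
    intros m Hm. destruct (Nat.eq_dec m (S N)) as [->|Hne]. apply Rmin_r.
    apply Rle_trans with d. apply Rmin_l. apply IH; lia.
Qed.

Lemma nu_range alpha : 0 <= alpha < 1 -> 0 <= nu_ alpha <= 1/2.
Proof.
  intros Ha. unfold nu_. split. apply Rdiv_le_0_compat; lra.
  apply Rmult_le_reg_r with (2 - alpha). lra. unfold Rdiv. rewrite Rmult_assoc, Rinv_l by lra. lra.
Qed.

Lemma tPhi_int alpha m a b : 0 <= alpha < 1 -> 0 < a < b ->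
  RInt (fun x => tPhi alpha m x ^ 2) a b =
  if Nat.odd m then Rv (- nu_ alpha) (Rpower a (kappa_ alpha)) (Rpower b (kappa_ alpha)) ((m + 1) / 2)
  else Rv (nu_ alpha) (Rpower a (kappa_ alpha)) (Rpower b (kappa_ alpha)) (m / 2).
Proof.
  intros Ha Hab. pose proof (nu_range alpha Ha) as Hn.
  unfold tPhi. destruct (Nat.odd m).
  - set (n := ((m + 1) / 2)%nat). unfold Rv. rewrite <- I_eq; auto; try lra.
    2: apply bz_isZ; lra.
    apply RI_ext. intros x Hx. rewrite Rmin_left, Rmax_right in Hx by lra.
    unfold Phi_e. destruct (Req_EM_T x 0). exfalso; lra. rewrite (Rabs_right x) by lra. reflexivity.
  - set (n := (m / 2)%nat). unfold Rv. rewrite <- I_eq; auto; try lra.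
    2: apply bz_isZ; lra.
    apply RI_ext. intros x Hx. rewrite Rmin_left, Rmax_right in Hx by lra.
    unfold Phi_o. destruct (Rlt_dec 0 x). reflexivity. exfalso; lra.
Qed.

Theorem lemma7p2 (alpha a b : R) :
  0 <= alpha < 1 -> 0 < a -> a < b -> b < 1 ->
  exists mu : R, 0 < mu /\
    forall m : nat, (1 <= m)%nat ->
      RInt (fun x => (tPhi alpha m x) ^ 2) a b >= mu.
Proof.
  intros Ha Ha0 Hab Hb1. pose proof (nu_range alpha Ha) as Hn.
  set (k := kappa_ alpha). assert (Hk : 0 < k) by (unfold k, kappa_; lra).
  set (A := Rpower a k). set (B := Rpower b k).
  assert (HAB : 0 < A < B) by (unfold A, B; split; [apply Rpower_pos| apply Rlt_Rpower_l; [lra|split; lra]]).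
  assert (HB1 : B < 1).
  { unfold B. replace 1 with (Rpower 1 k). apply Rlt_Rpower_l; [lra|split; lra]. unfold Rpower. rewrite ln_1, Rmult_0_r. apply exp_0. }
  destruct (large_n (- nu_ alpha) A B ltac:(lra) HAB HB1) as [Ne HNe].
  destruct (large_n (nu_ alpha) A B ltac:(lra) HAB HB1) as [No HNo].
  set (f := fun m => RInt (fun x => tPhi alpha m x ^ 2) a b).
  assert (Hfpos : forall m, (1 <= m)%nat -> 0 < f m).
  { intros m Hm. unfold f. rewrite tPhi_int by (auto; lra). destruct (Nat.odd m); unfold Rv;
      (apply R_pos; [lra | exact HAB | apply bz_isZ; lra]). }
  destruct (fin_min f (2 * (Ne + No) + 2) Hfpos) as [d [Hd Hfin]].
  exists (Rmin d ((B - A) / 8)). split. apply Rmin_pos; lra.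
  intros m Hm. apply Rle_ge. fold (f m).
  destruct (le_lt_dec m (2 * (Ne + No) + 2)) as [Hle|Hgt].
  - apply Rle_trans with d. apply Rmin_l. apply Hfin; lia.
  - apply Rle_trans with ((B - A) / 8). apply Rmin_r.
    unfold f. rewrite tPhi_int by (auto; lra). fold k A B.
    destruct (Nat.odd m) eqn:Hodd.
    + apply HNe. apply Nat.odd_spec in Hodd. destruct Hodd as [q ->].
      replace (2 * q + 1 + 1)%nat with (2 * (q + 1))%nat by lia. rewrite Nat.mul_comm, Nat.div_mul by lia. lia.
    + apply HNo. assert (Nat.even m = true) by (rewrite <- Nat.negb_odd, Hodd; reflexivity).
      apply Nat.even_spec in H. destruct H as [q ->]. rewrite Nat.mul_comm, Nat.div_mul by lia. lia.
Qed.
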